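(* Suppose $\Sigma=\mathbb C_j$ and let $Z^{(-1)}(\alpha,z_0,z)$ and $\widehat Z^{(-1)}(\alpha,z_0,z)$ ($\alpha=1,j$) be Cauchy kernels in $\mathbb C_j$ of $\partial_{\overline z}W=aW+b\overline W$ and of $\partial_{\overline z}V=-aV-\overline b\,\overline V$ respectively, both behaving like $\mathcal O(|z|^{-1})$ as $z\to\infty$. Then $$\widehat Z^{(-1)}(1,z_0,z)=-\operatorname{Sc}Z^{(-1)}(1,z,z_0)+j\operatorname{Sc}Z^{(-1)}(j,z,z_0)$$ and $$\widehat Z^{(-1)}(j,z_0,z)=\operatorname{Vec}Z^{(-1)}(1,z,z_0)-j\operatorname{Vec}Z^{(-1)}(j,z,z_0).$$
   Context: Bicomplex numbers: $i,j$ imaginary units, $i^2=j^2=-1$, $ij=ji$; $\mathbb C_i=\{a+ib\}$, $\mathbb C_j=\{a+jb\}$ ($a,b$ real); $\mathbb B=\{u+jv:u,v\in\mathbb C_i\}$, $\operatorname{Sc}(u+jv)=u$, $\operatorname{Vec}(u+jv)=v$, $\overline{u+jv}=u-jv$. Plane $=\mathbb C_j$, $z=x+jy$, $\partial_{\overline z}=\frac12(\partial_x+j\partial_y)$. Norm on $\mathbb B$: writing $W^\pm=\operatorname{Sc}W\mp i\operatorname{Vec}W\in\mathbb C_i$, $|W|=\frac12(|W^+|+|W^-|)$. $Z=\mathcal O(|z|^{-1})$ as $z\to\infty$ means $|z|\,|Z(z)|$ is bounded for large $|z|$. Setting: $a,b$ are $\mathbb B$-valued Hölder continuous functions on $\mathbb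 C_j$; solutions of Vekua equations are $\mathbb B$-valued functions with continuous first partials satisfying the equation. A Cauchy kernel in $\Sigma$ of a Vekua equation is a family $Z^{(-1)}(1,z_0,z)$, $Z^{(-1)}(j,z_0,z)$, $z_0\in\Sigma$, both solutions in $z\in\Sigma\setminus\{z_0\}$, with $\lim_{z\to z_0}(z-z_0)Z^{(-1)}(\alpha,z_0,z)=\alpha$, $\alpha=1,j$. *)

(* Defs.v *)
From Stdlib Require Import Reals.
From Coquelicot Require Import Coquelicot.

Open Scope R_scope.

(* W = u + j v with u, v in C_i (Coquelicot's C, with imaginary unit i = Ci). *)
Record B := mkB { Sc : C ; Vec : C }.

Definition Badd (W V : B) : B := mkB (Cplus (Sc W) (Sc V)) (Cplus (Vec W) (Vec V)).
Definition Bopp (W : B) : B := mkB (Copp (Sc W)) (Copp (Vec W)).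
Definition Bsub (W V : B) : B := Badd W (Bopp V).
(* (u + j v)(u' + j v') = (u u' - v v') + j (u v' + v u')   since j^2 = -1, ij = ji *)
Definition Bmul (W V : B) : B :=
  mkB (Cminus (Cmult (Sc W) (Sc V)) (Cmult (Vec W) (Vec V)))
      (Cplus (Cmult (Sc W) (Vec V)) (Cmult (Vec W) (Sc V))).
Definition Bconj (W : B) : B := mkB (Sc W) (Copp (Vec W)).
Definition B1 : B := mkB (RtoC 1) (RtoC 0).
Definition Bj : B := mkB (RtoC 0) (RtoC 1).
Definition Bscal (r : R) (W : B) : B := mkB (Cmult (RtoC r) (Sc W)) (Cmult (RtoC r) (Vec W)).

Definition Bnorm (W : B) : R :=
  (Cmod (Cminus (Sc W) (Cmult Ci (Vec W))) + Cmod (Cplus (Sc W) (Cmult Ci (Vec W)))) / 2.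

(* A point z = x + j y of C_j is represented by the pair (x, y). *)
Definition Pt := (R * R)%type.
Definition toB (z : Pt) : B := mkB (RtoC (fst z)) (RtoC (snd z)).
Definition absj (z : Pt) : R := sqrt (fst z ^ 2 + snd z ^ 2).
Definition distj (z w : Pt) : R := absj (fst z - fst w, snd z - snd w).

Definition c1 (W : B) : R := fst (Sc W).
Definition c2 (W : B) : R := snd (Sc W).
Definition c3 (W : B) : R := fst (Vec W).
Definition c4 (W : B) : R := snd (Vec W).
Definition coords : list (B -> R) := c1 :: c2 :: c3 :: c4 :: nil.
Definition mkB4 (r1 r2 r3 r4 : R) : B := mkB (r1, r2) (r3, r4).

Definition dx (g : Pt -> R) (p : Pt) : R := Derive (fun t => g (t, snd p)) (fst p).
Definition dy (g : Pt -> R) (p : Pt) : R := Derive (fun t => g (fst p, t)) (snd p).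

Definition dxB (W : Pt -> B) (p : Pt) : B :=
  mkB4 (dx (fun q => c1 (W q)) p) (dx (fun q => c2 (W q)) p)
       (dx (fun q => c3 (W q)) p) (dx (fun q => c4 (W q)) p).
Definition dyB (W : Pt -> B) (p : Pt) : B :=
  mkB4 (dy (fun q => c1 (W q)) p) (dy (fun q => c2 (W q)) p)
       (dy (fun q => c3 (W q)) p) (dy (fun q => c4 (W q)) p).

Definition dzbar (W : Pt -> B) (p : Pt) : B :=
  Bscal (/ 2) (Badd (dxB W p) (Bmul Bj (dyB W p))).

Definition C1_on (U : Pt -> Prop) (W : Pt -> B) : Prop :=
  forall p, U p ->
  forall c, List.In c coords ->
    ex_derive (fun t => c (W (t, snd p))) (fst p) /\
    ex_derive (fun t => c (W (fst p, t))) (snd p) /\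
    continuous (dx (fun q => c (W q))) p /\
    continuous (dy (fun q => c (W q))) p.

Definition vekua_solution (a b : Pt -> B) (U : Pt -> Prop) (W : Pt -> B) : Prop :=
  C1_on U W /\
  forall p, U p -> dzbar W p = Badd (Bmul (a p) (W p)) (Bmul (b p) (Bconj (W p))).

Definition holder_continuous (f : Pt -> B) : Prop :=
  forall (c : Pt) (r : R), 0 < r ->
  exists alpha K : R, 0 < alpha <= 1 /\ 0 <= K /\
    forall z w, distj z c < r -> distj w c < r ->
      Bnorm (Bsub (f z) (f w)) <= K * Rpower (distj z w) alpha.

Definition Blim_at (F : Pt -> B) (z0 : Pt) (L : B) : Prop :=
  forall eps, 0 < eps -> exists delta, 0 < delta /\
    forall z, z <> z0 -> distj z z0 < delta -> Bnorm (Bsub (F z) L) < eps.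

(* Cauchy kernel in Sigma = C_j: Z1 z0 z = Z^{(-1)}(1,z0,z), Zj z0 z = Z^{(-1)}(j,z0,z) *)
Definition cauchy_kernel (a b : Pt -> B) (Z1 Zj : Pt -> Pt -> B) : Prop :=
  forall z0 : Pt,
    vekua_solution a b (fun z => z <> z0) (Z1 z0) /\
    vekua_solution a b (fun z => z <> z0) (Zj z0) /\
    Blim_at (fun z => Bmul (Bsub (toB z) (toB z0)) (Z1 z0 z)) z0 B1 /\
    Blim_at (fun z => Bmul (Bsub (toB z) (toB z0)) (Zj z0 z)) z0 Bj.

Definition bigO_inv (Z : Pt -> B) : Prop :=
  exists M R0 : R, forall z, R0 < absj z -> absj z * Bnorm (Z z) <= M.

Definition kernel_decay (Z1 Zj : Pt -> Pt -> B) : Prop :=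
  forall z0, bigO_inv (Z1 z0) /\ bigO_inv (Zj z0).

(* Main.v *)
Require Import Defs.
From Stdlib Require Import Reals Lra.
From Coquelicot Require Import Coquelicot.
Import Defs.
Open Scope R_scope.

Lemma locally_pt_iff (p : Pt) (P : Pt -> Prop) :
  locally p P <-> exists r, 0 < r /\ forall x y, Rabs (x - fst p) < r -> Rabs (y - snd p) < r -> P (x, y).
Proof.
  split.
  - intros [e He]. exists e. split; [apply cond_pos|]. intros x y Hx Hy.
    apply He. destruct p as [px py]. split; simpl; assumption.
  - intros [r [Hr H]]. exists (mkposreal r Hr). intros [x y] [Hx Hy]. apply H; assumption.
Qed.

Definition pd_ex (g : Pt -> R) (q : Pt) : Prop :=
  ex_derive (fun t => g (t, snd q)) (fst q) /\ ex_derive (fun t => g (fst q, t)) (snd q).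
Definition C1pt (g : Pt -> R) (p : Pt) : Prop :=
  locally p (pd_ex g) /\ continuous (dx g) p /\ continuous (dy g) p.

Lemma continuous_eps (g : Pt -> R) (p : Pt) :
  continuous g p <-> forall eps, 0 < eps -> exists r, 0 < r /\ forall x y,
    Rabs (x - fst p) < r -> Rabs (y - snd p) < r -> Rabs (g (x,y) - g p) < eps.
Proof.
  unfold continuous. rewrite filterlim_locally. split.
  - intros H eps He. destruct (proj1 (locally_pt_iff _ _) (H (mkposreal eps He))) as [r [Hr Hr']].
    exists r; split; auto.
  - intros H eps. apply locally_pt_iff. destruct (H eps (cond_pos eps)) as [r [Hr Hr']].
    exists r; split; auto.
Qed.

Lemma between_abs a b t : Rmin a b <= t <= Rmax a b -> Rabs (t - a) <= Rabs (b - a).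
Proof.
  intros Ht. unfold Rmin, Rmax in Ht; destruct (Rle_dec a b).
  + rewrite (Rabs_pos_eq (b - a)) by lra.
    destruct (Rle_dec 0 (t - a)); [rewrite Rabs_pos_eq; lra| rewrite Rabs_left1; lra].
  + rewrite (Rabs_left1 (b - a)) by lra.
    destruct (Rle_dec 0 (t - a)); [rewrite Rabs_pos_eq; lra| rewrite Rabs_left1; lra].
Qed.

Lemma ex_derive_cont_pt (f : R -> R) x : ex_derive f x -> continuity_pt f x.
Proof. intros H. apply ex_derive_continuous in H. apply continuity_pt_filterlim. exact H. Qed.

Lemma C1_cont g p : C1pt g p -> continuous g p.
Proof.
  intros [Hl [Hdx Hdy]]. destruct p as [x0 y0].
  apply continuous_eps. intros eps He.
  destruct (proj1 (locally_pt_iff _ _) Hl) as [r1 [Hr1 H1]].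
  destruct (proj1 (continuous_eps _ _) Hdx 1 Rlt_0_1) as [r2 [Hr2 H2]].
  assert (Hd0 : pd_ex g (x0, y0)) by (apply H1; simpl; rewrite Rminus_diag, Rabs_R0; lra).
  destruct Hd0 as [_ Hdy0]. simpl in Hdy0.
  apply ex_derive_continuous in Hdy0.
  unfold continuous in Hdy0. rewrite filterlim_locally in Hdy0.
  destruct (Hdy0 (mkposreal (eps/2) ltac:(lra))) as [r3 H3].
  set (M := Rabs (dx g (x0,y0)) + 1).
  assert (HM : 0 < M) by (unfold M; pose proof (Rabs_pos (dx g (x0,y0))); lra).
  exists (Rmin (Rmin r1 r2) (Rmin r3 (eps / (2 * M)))).
  split.
  { repeat apply Rmin_pos; try lra; try apply cond_pos. apply Rdiv_lt_0_compat; lra. }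
  intros x y Hx Hy. simpl in Hx, Hy.
  assert (Hm1 := Rmin_l (Rmin r1 r2) (Rmin r3 (eps / (2 * M)))).
  assert (Hm2 := Rmin_r (Rmin r1 r2) (Rmin r3 (eps / (2 * M)))).
  assert (Hr1' := Rmin_l r1 r2). assert (Hr2' := Rmin_r r1 r2).
  assert (Hr3' := Rmin_l r3 (eps / (2 * M))). assert (Hr4' := Rmin_r r3 (eps / (2 * M))).
  set (rr := Rmin (Rmin r1 r2) (Rmin r3 (eps / (2 * M)))) in *.
  assert (Hmvt : exists c, Rmin x0 x <= c <= Rmax x0 x /\
            g (x, y) - g (x0, y) = dx g (c, y) * (x - x0)).
  { apply (MVT_gen (fun t => g (t, y)) x0 x (fun t => dx g (t, y))).
    - intros t Ht. assert (Hp : pd_ex g (t, y)).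
      { apply H1; simpl.
        - assert (Rabs (t - x0) <= Rabs (x - x0)) by (apply between_abs; lra).
          lra.
        - lra. }
      destruct Hp as [Hp _]. simpl in Hp.
      unfold dx; simpl. apply Derive_correct. exact Hp.
    - intros t Ht. assert (Hp : pd_ex g (t, y)).
      { apply H1; simpl.
        - assert (Rabs (t - x0) <= Rabs (x - x0)) by (apply between_abs; lra).
          lra.
        - lra. }
      destruct Hp as [Hp _]. simpl in Hp.
      apply ex_derive_cont_pt. exact Hp. }
  destruct Hmvt as [c [Hc Heq]].
  assert (Hcb : Rabs (dx g (c, y)) <= M).
  { assert (Hc' : Rabs (c - x0) < r2).
    { assert (Rabs (c - x0) <= Rabs (x - x0)) by (apply between_abs; lra).
      lra. }
    specialize (H2 c y Hc' ltac:(simpl; lra)).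
    unfold M. pose proof (Rabs_triang_inv (dx g (c,y)) (dx g (x0,y0))). lra. }
  assert (Hy3 : Rabs (g (x0, y) - g (x0, y0)) < eps / 2).
  { apply (H3 y). simpl. unfold ball; simpl. unfold AbsRing_ball, abs, minus, plus, opp; simpl. change (Rabs (y - y0) < r3). lra. }
  replace (g (x, y) - g (x0, y0)) with ((g (x, y) - g (x0, y)) + (g (x0, y) - g (x0, y0))) by ring.
  eapply Rle_lt_trans; [apply Rabs_triang|].
  rewrite Heq, Rabs_mult.
  assert (Rabs (dx g (c, y)) * Rabs (x - x0) <= M * (eps / (2 * M))).
  { apply Rmult_le_compat; try apply Rabs_pos; lra. }
  assert (M * (eps / (2 * M)) = eps / 2) by (field; lra).
  lra.
Qed.
Lemma contR_mult (f g : Pt -> R) p : continuous f p -> continuous g p -> continuous (fun q => f q * g q) p.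
Proof. intros. apply (continuous_mult (K:=R_AbsRing) f g p); auto. Qed.
Lemma contR_plus (f g : Pt -> R) p : continuous f p -> continuous g p -> continuous (fun q => f q + g q) p.
Proof. intros. apply (continuous_plus (V:=R_NormedModule) f g p); auto. Qed.
Lemma contR_minus (f g : Pt -> R) p : continuous f p -> continuous g p -> continuous (fun q => f q - g q) p.
Proof. intros. apply (continuous_minus (V:=R_NormedModule) f g p); auto. Qed.

Lemma pd_mult f g q : pd_ex f q -> pd_ex g q -> pd_ex (fun q => f q * g q) q.
Proof. intros [? ?] [? ?]. split; apply ex_derive_mult; auto. Qed.
Lemma pd_plus f g q : pd_ex f q -> pd_ex g q -> pd_ex (fun q => f q + g q) q.
Proof. intros [? ?] [? ?]. split; apply (ex_derive_plus (K:=R_AbsRing) (V:=R_NormedModule)); auto. Qed.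
Lemma pd_minus f g q : pd_ex f q -> pd_ex g q -> pd_ex (fun q => f q - g q) q.
Proof. intros [? ?] [? ?]. split; apply (ex_derive_minus (K:=R_AbsRing) (V:=R_NormedModule)); auto. Qed.

Lemma dx_mult f g q : pd_ex f q -> pd_ex g q ->
  dx (fun q => f q * g q) q = dx f q * g q + f q * dx g q.
Proof. intros [? ?] [? ?]. unfold dx. rewrite Derive_mult; auto. destruct q; reflexivity. Qed.
Lemma dy_mult f g q : pd_ex f q -> pd_ex g q ->
  dy (fun q => f q * g q) q = dy f q * g q + f q * dy g q.
Proof. intros [? ?] [? ?]. unfold dy. rewrite Derive_mult; auto. destruct q; reflexivity. Qed.
Lemma dx_plus f g q : pd_ex f q -> pd_ex g q -> dx (fun q => f q + g q) q = dx f q + dx g q.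
Proof. intros [? ?] [? ?]. unfold dx. rewrite Derive_plus; auto. Qed.
Lemma dy_plus f g q : pd_ex f q -> pd_ex g q -> dy (fun q => f q + g q) q = dy f q + dy g q.
Proof. intros [? ?] [? ?]. unfold dy. rewrite Derive_plus; auto. Qed.
Lemma dx_minus f g q : pd_ex f q -> pd_ex g q -> dx (fun q => f q - g q) q = dx f q - dx g q.
Proof. intros [? ?] [? ?]. unfold dx. rewrite Derive_minus; auto. Qed.
Lemma dy_minus f g q : pd_ex f q -> pd_ex g q -> dy (fun q => f q - g q) q = dy f q - dy g q.
Proof. intros [? ?] [? ?]. unfold dy. rewrite Derive_minus; auto. Qed.

Lemma C1_mult f g p : C1pt f p -> C1pt g p -> C1pt (fun q => f q * g q) p.
Proof.
  intros Hf Hg. pose proof (C1_cont _ _ Hf) as cf. pose proof (C1_cont _ _ Hg) as cg.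
  destruct Hf as [lf [xf yf]]; destruct Hg as [lg [xg yg]].
  assert (L : locally p (fun q => pd_ex f q /\ pd_ex g q)) by (apply filter_and; auto).
  split; [|split].
  - apply (filter_imp _ _ (fun q H => pd_mult f g q (proj1 H) (proj2 H)) L).
  - apply (continuous_ext_loc _ (fun q => dx f q * g q + f q * dx g q)).
    + apply (filter_imp _ _ (fun q H => eq_sym (dx_mult f g q (proj1 H) (proj2 H))) L).
    + apply contR_plus; apply contR_mult; auto.
  - apply (continuous_ext_loc _ (fun q => dy f q * g q + f q * dy g q)).
    + apply (filter_imp _ _ (fun q H => eq_sym (dy_mult f g q (proj1 H) (proj2 H))) L).
    + apply contR_plus; apply contR_mult; auto.
Qed.
Lemma C1_plus f g p : C1pt f p -> C1pt g p -> C1pt (fun q => f q + g q) p.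
Proof.
  intros [lf [xf yf]] [lg [xg yg]].
  assert (L : locally p (fun q => pd_ex f q /\ pd_ex g q)) by (apply filter_and; auto).
  split; [|split].
  - apply (filter_imp _ _ (fun q H => pd_plus f g q (proj1 H) (proj2 H)) L).
  - apply (continuous_ext_loc _ (fun q => dx f q + dx g q)).
    + apply (filter_imp _ _ (fun q H => eq_sym (dx_plus f g q (proj1 H) (proj2 H))) L).
    + apply contR_plus; auto.
  - apply (continuous_ext_loc _ (fun q => dy f q + dy g q)).
    + apply (filter_imp _ _ (fun q H => eq_sym (dy_plus f g q (proj1 H) (proj2 H))) L).
    + apply contR_plus; auto.
Qed.
Lemma C1_minus f g p : C1pt f p -> C1pt g p -> C1pt (fun q => f q - g q) p.
Proof.
  intros [lf [xf yf]] [lg [xg yg]].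
  assert (L : locally p (fun q => pd_ex f q /\ pd_ex g q)) by (apply filter_and; auto).
  split; [|split].
  - apply (filter_imp _ _ (fun q H => pd_minus f g q (proj1 H) (proj2 H)) L).
  - apply (continuous_ext_loc _ (fun q => dx f q - dx g q)).
    + apply (filter_imp _ _ (fun q H => eq_sym (dx_minus f g q (proj1 H) (proj2 H))) L).
    + apply contR_minus; auto.
  - apply (continuous_ext_loc _ (fun q => dy f q - dy g q)).
    + apply (filter_imp _ _ (fun q H => eq_sym (dy_minus f g q (proj1 H) (proj2 H))) L).
    + apply contR_minus; auto.
Qed.
Lemma C1_pd g p : C1pt g p -> pd_ex g p.
Proof. intros [[e He] _]. apply He. apply ball_center. Qed.

Lemma c1_mul X Y : c1 (Bmul X Y) = c1 X * c1 Y - c2 X * c2 Y - (c3 X * c3 Y - c4 X * c4 Y).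
Proof. destruct X as [[? ?] [? ?]], Y as [[? ?] [? ?]]. unfold c1, c2, c3, c4, Bmul; simpl. ring. Qed.
Lemma c2_mul X Y : c2 (Bmul X Y) = c1 X * c2 Y + c2 X * c1 Y - (c3 X * c4 Y + c4 X * c3 Y).
Proof. destruct X as [[? ?] [? ?]], Y as [[? ?] [? ?]]. unfold c1, c2, c3, c4, Bmul; simpl. ring. Qed.
Lemma c3_mul X Y : c3 (Bmul X Y) = c1 X * c3 Y - c2 X * c4 Y + (c3 X * c1 Y - c4 X * c2 Y).
Proof. destruct X as [[? ?] [? ?]], Y as [[? ?] [? ?]]. unfold c1, c2, c3, c4, Bmul; simpl. ring. Qed.
Lemma c4_mul X Y : c4 (Bmul X Y) = c1 X * c4 Y + c2 X * c3 Y + (c3 X * c2 Y + c4 X * c1 Y).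
Proof. destruct X as [[? ?] [? ?]], Y as [[? ?] [? ?]]. unfold c1, c2, c3, c4, Bmul; simpl. ring. Qed.

Lemma vekua_coords (W : Pt -> B) (RHS : B) q : dzbar W q = RHS ->
  dx (fun q => c1 (W q)) q = dy (fun q => c3 (W q)) q + 2 * c1 RHS /\
  dx (fun q => c2 (W q)) q = dy (fun q => c4 (W q)) q + 2 * c2 RHS /\
  dx (fun q => c3 (W q)) q = - dy (fun q => c1 (W q)) q + 2 * c3 RHS /\
  dx (fun q => c4 (W q)) q = - dy (fun q => c2 (W q)) q + 2 * c4 RHS.
Proof.
  intros H. subst RHS. unfold dzbar, dxB, dyB, Bscal, Badd, Bmul, Bj, mkB4, c1, c2, c3, c4; simpl.
  repeat split; field.
Qed.

Definition allC1 (W : Pt -> B) p := forall c, List.In c coords -> C1pt (fun q => c (W q)) p.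

Lemma allC1_of (U : Pt -> Prop) W p : C1_on U W -> (forall p, U p -> locally p U) -> U p -> allC1 W p.
Proof.
  intros HC HU Hp c Hc. split; [|split].
  - apply (filter_imp U). 2: apply HU, Hp.
    intros q Hq. destruct (HC q Hq c Hc) as [h1 [h2 _]]. split; assumption.
  - apply (HC p Hp c Hc).
  - apply (HC p Hp c Hc).
Qed.

Section Forms.
Variables (W V : Pt -> B) (p : Pt).
Hypothesis (HW : allC1 W p) (HV : allC1 V p).

Let w1 := fun q => c1 (W q). Let w2 := fun q => c2 (W q).
Let w3 := fun q => c3 (W q). Let w4 := fun q => c4 (W q).
Let v1 := fun q => c1 (V q). Let v2 := fun q => c2 (V q).
Let v3 := fun q => c3 (V q). Let v4 := fun q => c4 (V q).

Lemma HW1 : C1pt w1 p. Proof. apply HW; simpl; tauto. Qed.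
Lemma HW2 : C1pt w2 p. Proof. apply HW; simpl; tauto. Qed.
Lemma HW3 : C1pt w3 p. Proof. apply HW; simpl; tauto. Qed.
Lemma HW4 : C1pt w4 p. Proof. apply HW; simpl; tauto. Qed.
Lemma HV1 : C1pt v1 p. Proof. apply HV; simpl; tauto. Qed.
Lemma HV2 : C1pt v2 p. Proof. apply HV; simpl; tauto. Qed.
Lemma HV3 : C1pt v3 p. Proof. apply HV; simpl; tauto. Qed.
Lemma HV4 : C1pt v4 p. Proof. apply HV; simpl; tauto. Qed.

Lemma dx_ext f g q : (forall z, f z = g z) -> dx f q = dx g q.
Proof. intros H. unfold dx. apply Derive_ext. intros; apply H. Qed.
Lemma dy_ext f g q : (forall z, f z = g z) -> dy f q = dy g q.
Proof. intros H. unfold dy. apply Derive_ext. intros; apply H. Qed.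

Ltac base_c1 := match goal with
  | |- C1pt w1 _ => exact HW1 | |- C1pt w2 _ => exact HW2 | |- C1pt w3 _ => exact HW3 | |- C1pt w4 _ => exact HW4
  | |- C1pt v1 _ => exact HV1 | |- C1pt v2 _ => exact HV2 | |- C1pt v3 _ => exact HV3 | |- C1pt v4 _ => exact HV4 end.
Ltac c1solve := match goal with
  | |- C1pt (fun q => _ * _) _ => apply C1_mult; c1solve
  | |- C1pt (fun q => _ + _) _ => apply C1_plus; c1solve
  | |- C1pt (fun q => _ - _) _ => apply C1_minus; c1solve
  | _ => base_c1 end.
Ltac pdsolve := match goal with
  | |- pd_ex (fun q => _ * _) _ => apply pd_mult; pdsolve
  | |- pd_ex (fun q => _ + _) _ => apply pd_plus; pdsolve
  | |- pd_ex (fun q => _ - _) _ => apply pd_minus; pdsolve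
  | _ => apply C1_pd; base_c1 end.

Lemma C1_P1 : C1pt (fun q => c3 (Bmul (W q) (V q))) p.
Proof.
  replace (fun q => c3 (Bmul (W q) (V q))) with
    (fun q => w1 q * v3 q - w2 q * v4 q + (w3 q * v1 q - w4 q * v2 q)).
  2:{ apply FunctionalExtensionality.functional_extensionality; intros; rewrite c3_mul; reflexivity. }
  c1solve.
Qed.
Lemma C1_Q1 : C1pt (fun q => c1 (Bmul (W q) (V q))) p.
Proof.
  replace (fun q => c1 (Bmul (W q) (V q))) with
    (fun q => w1 q * v1 q - w2 q * v2 q - (w3 q * v3 q - w4 q * v4 q)).
  2:{ apply FunctionalExtensionality.functional_extensionality; intros; rewrite c1_mul; reflexivity. }
  c1solve.
Qed.
Lemma C1_P2 : C1pt (fun q => c4 (Bmul (W q) (V q))) p.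
Proof.
  replace (fun q => c4 (Bmul (W q) (V q))) with
    (fun q => w1 q * v4 q + w2 q * v3 q + (w3 q * v2 q + w4 q * v1 q)).
  2:{ apply FunctionalExtensionality.functional_extensionality; intros; rewrite c4_mul; reflexivity. }
  c1solve.
Qed.
Lemma C1_Q2 : C1pt (fun q => c2 (Bmul (W q) (V q))) p.
Proof.
  replace (fun q => c2 (Bmul (W q) (V q))) with
    (fun q => w1 q * v2 q + w2 q * v1 q - (w3 q * v4 q + w4 q * v3 q)).
  2:{ apply FunctionalExtensionality.functional_extensionality; intros; rewrite c2_mul; reflexivity. }
  c1solve.
Qed.

Variables (a b : Pt -> B).
Hypothesis (EW : dzbar W p = Badd (Bmul (a p) (W p)) (Bmul (b p) (Bconj (W p))))
  (EV : dzbar V p = Badd (Bmul (Bopp (a p)) (V p)) (Bmul (Bopp (Bconj (b p))) (Bconj (V p)))).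

Lemma closed_1 : dy (fun q => c3 (Bmul (W q) (V q))) p = dx (fun q => c1 (Bmul (W q) (V q))) p.
Proof.
  rewrite (dy_ext _ (fun q => w1 q * v3 q - w2 q * v4 q + (w3 q * v1 q - w4 q * v2 q)))
    by (intros; apply c3_mul).
  rewrite (dx_ext _ (fun q => w1 q * v1 q - w2 q * v2 q - (w3 q * v3 q - w4 q * v4 q)))
    by (intros; apply c1_mul).
  rewrite dy_plus, !dy_minus, !dy_mult by pdsolve.
  rewrite dx_minus, !dx_minus, !dx_mult by pdsolve.
  destruct (vekua_coords W _ p EW) as [E1 [E2 [E3 E4]]].
  destruct (vekua_coords V _ p EV) as [F1 [F2 [F3 F4]]].
  unfold w1, w2, w3, w4, v1, v2, v3, v4.
  rewrite E1, E2, E3, E4, F1, F2, F3, F4.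
  unfold c1, c2, c3, c4, Badd, Bmul, Bconj, Bopp; simpl. ring.
Qed.

Lemma closed_2 : dy (fun q => c4 (Bmul (W q) (V q))) p = dx (fun q => c2 (Bmul (W q) (V q))) p.
Proof.
  rewrite (dy_ext _ (fun q => w1 q * v4 q + w2 q * v3 q + (w3 q * v2 q + w4 q * v1 q)))
    by (intros; apply c4_mul).
  rewrite (dx_ext _ (fun q => w1 q * v2 q + w2 q * v1 q - (w3 q * v4 q + w4 q * v3 q)))
    by (intros; apply c2_mul).
  rewrite !dy_plus, !dy_mult by pdsolve.
  rewrite dx_minus, !dx_plus, !dx_mult by pdsolve.
  destruct (vekua_coords W _ p EW) as [E1 [E2 [E3 E4]]].
  destruct (vekua_coords V _ p EV) as [F1 [F2 [F3 F4]]].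
  unfold w1, w2, w3, w4, v1, v2, v3, v4.
  rewrite E1, E2, E3, E4, F1, F2, F3, F4.
  unfold c1, c2, c3, c4, Badd, Bmul, Bconj, Bopp; simpl. ring.
Qed.

End Forms.
Lemma cont_h (g : Pt -> R) x y : continuous g (x, y) -> continuous (fun t => g (t, y)) x.
Proof.
  intros H0. pose proof (proj1 (continuous_eps g _) H0) as H. clear H0. unfold continuous. apply filterlim_locally.
  intros eps. destruct (H eps (cond_pos eps)) as [r [Hr H']]. exists (mkposreal r Hr).
  intros t Ht. apply (H' t y); simpl. exact Ht. rewrite Rminus_diag, Rabs_R0; exact Hr.
Qed.
Lemma cont_v (g : Pt -> R) x y : continuous g (x, y) -> continuous (fun t => g (x, t)) y.
Proof.
  intros H0. pose proof (proj1 (continuous_eps g _) H0) as H. clear H0. unfold continuous. apply filterlim_locally.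
  intros eps. destruct (H eps (cond_pos eps)) as [r [Hr H']]. exists (mkposreal r Hr).
  intros t Ht. apply (H' x t); simpl. rewrite Rminus_diag, Rabs_R0; exact Hr. exact Ht.
Qed.
Lemma cont_swap2d (g : Pt -> R) s t : continuous g (t, s) -> continuity_2d_pt (fun u v => g (v, u)) s t.
Proof.
  intros H0. pose proof (proj1 (continuous_eps g _) H0) as H. clear H0. intros eps. destruct (H eps (cond_pos eps)) as [r [Hr H']].
  exists (mkposreal r Hr). intros u v Hu Hv. apply (H' v u); assumption.
Qed.
Lemma cont_2d (g : Pt -> R) s t : continuous g (s, t) -> continuity_2d_pt (fun u v => g (u, v)) s t.
Proof.
  intros H0. pose proof (proj1 (continuous_eps g _) H0) as H. clear H0. intros eps. destruct (H eps (cond_pos eps)) as [r [Hr H']].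
  exists (mkposreal r Hr). intros u v Hu Hv. apply (H' u v); assumption.
Qed.

Definition hI (P : Pt -> R) y a b := RInt (fun x => P (x, y)) a b.
Definition vI (Q : Pt -> R) x c d := RInt (fun y => Q (x, y)) c d.
Definition rect P Q a b c d := hI P c a b + vI Q b c d - hI P d a b - vI Q a c d.

Definition goodPQ (P Q : Pt -> R) (z : Pt) := C1pt P z /\ C1pt Q z /\ dy P z = dx Q z.

Lemma ex_hI P y a b : (forall t, Rmin a b <= t <= Rmax a b -> C1pt P (t, y)) ->
  ex_RInt (fun x => P (x, y)) a b.
Proof. intros H. apply (ex_RInt_continuous (V:=R_CompleteNormedModule)). intros z Hz. apply cont_h, C1_cont, H, Hz. Qed.
Lemma ex_vI Q x c d : (forall t, Rmin c d <= t <= Rmax c d -> C1pt Q (x, t)) ->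
  ex_RInt (fun y => Q (x, y)) c d.
Proof. intros H. apply (ex_RInt_continuous (V:=R_CompleteNormedModule)). intros z Hz. apply cont_v, C1_cont, H, Hz. Qed.

Lemma minmax_in lo hi a b t : lo < a < hi -> lo < b < hi -> Rmin a b <= t <= Rmax a b -> lo < t < hi.
Proof. unfold Rmin, Rmax; destruct (Rle_dec a b); lra. Qed.

Lemma zero_deriv_const (G : R -> R) lo hi c d : lo < c -> c <= d -> d < hi ->
  (forall s, lo < s < hi -> is_derive G s 0) -> G d = G c.
Proof.
  intros H1 H2 H3 H.
  destruct (MVT_gen G c d (fun _ => 0)) as [e [He Heq]].
  - intros x Hx. apply H. unfold Rmin, Rmax in Hx; destruct (Rle_dec c d); lra.
  - intros x Hx. apply ex_derive_cont_pt. exists 0. apply H. unfold Rmin, Rmax in Hx; destruct (Rle_dec c d); lra.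
  - lra.
Qed.

Theorem green_rect (P Q : Pt -> R) a b c d delta : a <= b -> c <= d -> 0 < delta ->
  (forall x y, a - delta < x < b + delta -> c - delta < y < d + delta -> goodPQ P Q (x, y)) ->
  rect P Q a b c d = 0.
Proof.
  intros Hab Hcd Hd Hg.
  set (G := fun s => rect P Q a b c s).
  assert (Hin : forall x y, Rmin a b <= x <= Rmax a b -> c - delta < y < d + delta -> goodPQ P Q (x, y)).
  { intros x y Hx Hy. apply Hg; auto. unfold Rmin, Rmax in Hx; destruct (Rle_dec a b); lra. }
  assert (HD : forall s, c - delta < s < d + delta -> is_derive G s 0).
  { intros s Hs.
    set (rho := Rmin (s - (c - delta)) (d + delta - s)).
    assert (Hrho : 0 < rho) by (unfold rho; apply Rmin_pos; lra).
    assert (Hnear : forall s', Rabs (s' - s) < rho -> c - delta < s' < d + delta).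
    { intros s' Hs'. pose proof (Rmin_l (s - (c - delta)) (d + delta - s)).
      pose proof (Rmin_r (s - (c - delta)) (d + delta - s)). fold rho in H, H0.
      apply Rabs_def2 in Hs'. lra. }
    assert (DV : forall x, (a = x \/ b = x) -> is_derive (fun s => vI Q x c s) s (Q (x, s))).
    { intros x Hx.
      assert (Gx : forall y, c - delta < y < d + delta -> goodPQ P Q (x, y)).
      { intros y Hy. apply Hg; auto. destruct Hx; subst; lra. }
      apply (is_derive_RInt (fun y => Q (x, y)) (fun s => vI Q x c s) c s).
      - exists (mkposreal rho Hrho). intros s' Hs'. unfold vI. apply (RInt_correct (V:=R_CompleteNormedModule)).
        apply ex_vI. intros t Ht. apply Gx. apply (minmax_in _ _ c s'); try lra.
        apply Hnear. exact Hs'.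
      - apply cont_v, C1_cont, Gx. lra. }
    assert (DH : is_derive (fun s => hI P s a b) s (Q (b, s) - Q (a, s))).
    { unfold hI.
      assert (E : RInt (fun t => Derive (fun u => P (t, u)) s) a b = Q (b, s) - Q (a, s)).
      { rewrite (RInt_ext _ (fun t => Derive (fun u => Q (u, s)) t)).
        - apply RInt_Derive.
          + intros t Ht. destruct (C1_pd _ _ (proj1 (proj2 (Hin t s Ht Hs)))) as [h _]. exact h.
          + intros t Ht. apply (cont_h (dx Q) t s), (proj1 (proj2 (proj1 (proj2 (Hin t s Ht Hs))))).
        - intros t Ht. assert (Ht' : Rmin a b <= t <= Rmax a b) by lra.
          destruct (Hin t s Ht' Hs) as [_ [_ E]]. exact E. }
      rewrite <- E.
      apply (is_derive_RInt_param (fun u t => P (t, u)) a b s).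
      - exists (mkposreal rho Hrho). intros s' Hs' t Ht.
        destruct (C1_pd _ _ (proj1 (Hin t s' Ht (Hnear s' Hs')))) as [_ h]. exact h.
      - intros t Ht. apply (cont_swap2d (dy P) s t), (proj2 (proj2 (proj1 (Hin t s Ht Hs)))).
      - exists (mkposreal rho Hrho). intros s' Hs'. apply ex_hI. intros t Ht.
        apply (proj1 (Hin t s' Ht (Hnear s' Hs'))). }
    assert (DC : is_derive (fun _ : R => hI P c a b) s 0) by apply (is_derive_const (V:=R_NormedModule)).
    unfold G, rect.
    pose proof (DV b (or_intror eq_refl)) as D1. pose proof (DV a (or_introl eq_refl)) as D2.
    assert (Dtot := is_derive_minus (V:=R_NormedModule) _ _ s _ _
                (is_derive_minus (V:=R_NormedModule) _ _ s _ _
                   (is_derive_plus (V:=R_NormedModule) _ _ s _ _ DC D1) DH) D2).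
    replace 0 with (minus (minus (plus 0 (Q (b, s))) (Q (b, s) - Q (a, s))) (Q (a, s))).
    2:{ unfold minus, plus, opp; simpl. ring. }
    exact Dtot. }
  assert (E := zero_deriv_const G (c - delta) (d + delta) c d ltac:(lra) Hcd ltac:(lra) HD).
  change (G d = 0). rewrite E. unfold G, rect, vI. rewrite !RInt_point. unfold zero; simpl. ring.
Qed.
Lemma chasR (f : R -> R) a b c : ex_RInt f a b -> ex_RInt f b c -> RInt f a b + RInt f b c = RInt f a c.
Proof. intros H1 H2. rewrite <- (RInt_Chasles f a b c H1 H2). reflexivity. Qed.

Lemma rect_hole (P Q : Pt -> R) a b c d p q e delta :
  0 < delta -> 0 < e -> a < p - e -> p + e < b -> c < q - e -> q + e < d ->
  (forall x y, a - delta < x < b + delta -> c - delta < y < d + delta -> (x, y) <> (p, q) -> goodPQ P Q (x, y)) ->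
  rect P Q a b c d = rect P Q (p - e) (p + e) (q - e) (q + e).
Proof.
  intros Hd He H1 H2 H3 H4 Hg.
  set (dl := Rmin delta (e / 2)).
  assert (Hdl : 0 < dl) by (apply Rmin_pos; lra).
  assert (Hdl1 : dl <= delta) by apply Rmin_l. assert (Hdl2 : dl <= e / 2) by apply Rmin_r.
  assert (R1 : rect P Q a (p - e) c d = 0).
  { apply (green_rect _ _ _ _ _ _ dl); try lra. intros x y Hx Hy. apply Hg; try lra.
    intros E; inversion E; lra. }
  assert (R2 : rect P Q (p + e) b c d = 0).
  { apply (green_rect _ _ _ _ _ _ dl); try lra. intros x y Hx Hy. apply Hg; try lra.
    intros E; inversion E; lra. }
  assert (R3 : rect P Q (p - e) (p + e) c (q - e) = 0).
  { apply (green_rect _ _ _ _ _ _ dl); try lra. intros x y Hx Hy. apply Hg; try lra.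
    intros E; inversion E; lra. }
  assert (R4 : rect P Q (p - e) (p + e) (q + e) d = 0).
  { apply (green_rect _ _ _ _ _ _ dl); try lra. intros x y Hx Hy. apply Hg; try lra.
    intros E; inversion E; lra. }
  assert (EH : forall y x0 x1, (y = c \/ y = d) -> a <= x0 <= b -> a <= x1 <= b -> ex_RInt (fun x => P (x, y)) x0 x1).
  { intros y x0 x1 Hy Hx0 Hx1. apply ex_hI. intros t Ht.
    assert (a <= t <= b) by (unfold Rmin, Rmax in Ht; destruct (Rle_dec x0 x1); lra).
    apply Hg; try lra. intros E; inversion E; lra. }
  assert (EV : forall x y0 y1, (x = p - e \/ x = p + e) -> c <= y0 <= d -> c <= y1 <= d -> ex_RInt (fun y => Q (x, y)) y0 y1).
  { intros x y0 y1 Hx Hy0 Hy1. apply ex_vI. intros t Ht.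
    assert (c <= t <= d) by (unfold Rmin, Rmax in Ht; destruct (Rle_dec y0 y1); lra).
    apply Hg; try lra. intros E; inversion E; lra. }
  unfold rect, hI, vI in *.
  rewrite <- (chasR (fun x => P (x, c)) a (p - e) b), <- (chasR (fun x => P (x, c)) (p - e) (p + e) b)
    by (apply EH; lra).
  rewrite <- (chasR (fun x => P (x, d)) a (p - e) b), <- (chasR (fun x => P (x, d)) (p - e) (p + e) b)
    by (apply EH; lra).
  rewrite <- (chasR (fun y => Q (p - e, y)) c (q - e) d), <- (chasR (fun y => Q (p - e, y)) (q - e) (q + e) d) in R1
    by (apply EV; lra).
  rewrite <- (chasR (fun y => Q (p + e, y)) c (q - e) d), <- (chasR (fun y => Q (p + e, y)) (q - e) (q + e) d) in R2
    by (apply EV; lra).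
  lra.
Qed.

Lemma rect_split_x (P Q : Pt -> R) a m b c d :
  ex_RInt (fun x => P (x, c)) a m -> ex_RInt (fun x => P (x, c)) m b ->
  ex_RInt (fun x => P (x, d)) a m -> ex_RInt (fun x => P (x, d)) m b ->
  rect P Q a b c d = rect P Q a m c d + rect P Q m b c d.
Proof.
  intros. unfold rect, hI, vI.
  rewrite <- (chasR (fun x => P (x, c)) a m b), <- (chasR (fun x => P (x, d)) a m b) by assumption.
  ring.
Qed.
Lemma rect_split_y (P Q : Pt -> R) a b c m d :
  ex_RInt (fun y => Q (a, y)) c m -> ex_RInt (fun y => Q (a, y)) m d ->
  ex_RInt (fun y => Q (b, y)) c m -> ex_RInt (fun y => Q (b, y)) m d ->
  rect P Q a b c d = rect P Q a b c m + rect P Q a b m d.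
Proof.
  intros. unfold rect, hI, vI.
  rewrite <- (chasR (fun y => Q (a, y)) c m d), <- (chasR (fun y => Q (b, y)) c m d) by assumption.
  ring.
Qed.
Lemma main_int A B c e : 0 < e ->
  is_RInt (fun t => (A * (t - c) + B * e) / ((t - c) ^ 2 + e ^ 2)) (c - e) (c + e) (B * PI / 2).
Proof.
  intros He.
  set (F := fun t => A / 2 * ln ((t - c) ^ 2 + e ^ 2) + B * atan ((t - c) / e)).
  replace (B * PI / 2) with (minus (F (c + e)) (F (c - e))).
  2:{ unfold F, minus, plus, opp; simpl.
      replace (c + e - c) with e by ring. replace (c - e - c) with (- e) by ring.
      replace ((- e) ^ 2) with (e ^ 2) by ring.
      replace (e / e) with 1 by (field; lra). replace (- e / e) with (- 1) by (field; lra).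
      replace (- e * (- e * 1) + e * (e * 1)) with (e * (e * 1) + e * (e * 1)) by ring.
      replace (atan (-1)) with (- atan 1) by (rewrite <- atan_opp; f_equal; lra).
      rewrite atan_1. field. }
  apply (is_RInt_derive (V:=R_CompleteNormedModule)).
  - intros t Ht. unfold F. auto_derive.
    + assert (0 < e * (e * 1)) by nra. pose proof (Rle_0_sqr (t + - c)). unfold Rsqr in *. nra.
    + replace (t - c) with (t + - c) by ring. set (u := t + - c).
      assert (0 < e * e) by nra. pose proof (Rle_0_sqr u). unfold Rsqr in *.
      assert (Hd : 0 < u * (u * 1) + e * (e * 1)) by nra.
      assert (Hd2 : 0 < u ^ 2 + e ^ 2) by (simpl; nra).
      assert (Hd3 : 1 + u * / e * (u * / e * 1) = (u * (u * 1) + e * (e * 1)) / (e * e)) by (field; lra).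
      rewrite Hd3. field. repeat split; lra.
  - intros t Ht. apply (ex_derive_continuous (K:=R_AbsRing) (V:=R_NormedModule)). auto_derive.
    assert (0 < e * (e * 1)) by nra. pose proof (Rle_0_sqr (t + - c)). unfold Rsqr in *. nra.
Qed.
Lemma frac_bound N D e eta : 0 < e -> e * e <= D -> Rabs N <= 2 * e * eta -> Rabs (N / D) <= 2 * eta / e.
Proof.
  intros He HD HN. assert (0 < D) by nra.
  rewrite Rabs_div by lra. rewrite (Rabs_pos_eq D) by lra.
  apply (Rmult_le_reg_r D); auto. unfold Rdiv. rewrite Rmult_assoc, Rinv_l, Rmult_1_r by lra.
  assert (0 <= eta) by (pose proof (Rabs_pos N); nra).
  assert (2 * eta * / e * D >= 2 * eta * / e * (e * e)).
  { apply Rle_ge, Rmult_le_compat_l; auto. assert (0 < / e) by (apply Rinv_0_lt_compat; lra). nra. }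
  replace (2 * eta * / e * (e * e)) with (2 * e * eta) in H1 by (field; lra). lra.
Qed.

Lemma edge_lemma (g fa fb : R -> R) A B s c e eta : 0 < e -> (s = 1 \/ s = -1) ->
  ex_RInt g (c - e) (c + e) ->
  (forall t, c - e <= t <= c + e -> g t = ((t - c) * fa t + s * e * fb t) / ((t - c) ^ 2 + e ^ 2)) ->
  (forall t, c - e <= t <= c + e -> Rabs (fa t - A) <= eta /\ Rabs (fb t - B) <= eta) ->
  Rabs (RInt g (c - e) (c + e) - s * B * PI / 2) <= 4 * eta.
Proof.
  intros He Hs Hex Hg Hb.
  set (m := fun t => (A * (t - c) + (s * B) * e) / ((t - c) ^ 2 + e ^ 2)).
  assert (Hm : is_RInt m (c - e) (c + e) (s * B * PI / 2)) by (apply main_int; auto).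
  assert (Hm' : ex_RInt m (c - e) (c + e)) by (eexists; exact Hm).
  rewrite <- (is_RInt_unique m _ _ _ Hm).
  assert (E := RInt_minus g m (c - e) (c + e) Hex Hm').
  change (RInt (fun x => g x - m x) (c - e) (c + e) = RInt g (c - e) (c + e) - RInt m (c - e) (c + e)) in E.
  rewrite <- E.
  replace (4 * eta) with ((c + e - (c - e)) * (2 * eta / e)) by (field; lra).
  apply abs_RInt_le_const; [lra| |].
  - apply (ex_RInt_minus (V:=R_NormedModule) g m); auto.
  - intros t Ht. rewrite Hg by auto. unfold m.
    replace (((t - c) * fa t + s * e * fb t) / ((t - c) ^ 2 + e ^ 2) -
             (A * (t - c) + s * B * e) / ((t - c) ^ 2 + e ^ 2))
      with (((t - c) * (fa t - A) + s * e * (fb t - B)) / ((t - c) ^ 2 + e ^ 2)).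
    2:{ assert (0 < (t - c) ^ 2 + e ^ 2) by (pose proof (pow2_ge_0 (t - c)); assert (0 < e ^ 2) by (apply pow_lt; lra); lra).
        field. lra. }
    apply frac_bound; auto.
    + pose proof (pow2_ge_0 (t - c)). simpl. nra.
    + destruct (Hb t Ht) as [B1 B2].
      eapply Rle_trans; [apply Rabs_triang|]. rewrite !Rabs_mult.
      assert (Rabs (t - c) <= e) by (apply Rabs_le; lra).
      assert (Rabs s = 1) by (destruct Hs; subst; [apply Rabs_R1| rewrite Rabs_left; lra]).
      rewrite H0, (Rabs_pos_eq e) by lra.
      pose proof (Rabs_pos (fa t - A)). pose proof (Rabs_pos (t - c)). pose proof (Rabs_pos (fb t - B)).
      nra.
Qed.
Lemma small_all z : (forall eta, 0 < eta -> Rabs z <= 16 * eta) -> z = 0.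
Proof.
  intros H. destruct (Req_dec z 0) as [E|E]; auto.
  assert (0 < Rabs z) by (apply Rabs_pos_lt; auto).
  specialize (H (Rabs z / 32) ltac:(lra)). lra.
Qed.

Lemma residue (P Q f1 f3 : Pt -> R) p q l1 l3 K e0 : 0 < e0 ->
  (forall x y, (x, y) <> (p, q) -> P (x, y) = ((x - p) * f3 (x, y) - (y - q) * f1 (x, y)) / ((x - p) ^ 2 + (y - q) ^ 2)) ->
  (forall x y, (x, y) <> (p, q) -> Q (x, y) = ((x - p) * f1 (x, y) + (y - q) * f3 (x, y)) / ((x - p) ^ 2 + (y - q) ^ 2)) ->
  (forall eta, 0 < eta -> exists delta, 0 < delta /\ forall x y, (x, y) <> (p, q) -> Rabs (x - p) < delta -> Rabs (y - q) < delta ->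
      Rabs (f1 (x, y) - l1) <= eta /\ Rabs (f3 (x, y) - l3) <= eta) ->
  (forall x y, (x, y) <> (p, q) -> Rabs (x - p) < e0 -> Rabs (y - q) < e0 -> C1pt P (x, y) /\ C1pt Q (x, y)) ->
  (forall e, 0 < e < e0 -> rect P Q (p - e) (p + e) (q - e) (q + e) = K) ->
  K = 2 * PI * l1.
Proof.
  intros He0 HP HQ Hf Hc HK.
  apply Rminus_diag_uniq. apply small_all. intros eta Heta.
  destruct (Hf eta Heta) as [dl [Hdl Hdl']].
  set (e := Rmin e0 dl / 2).
  assert (He : 0 < e) by (unfold e; assert (0 < Rmin e0 dl) by (apply Rmin_pos; lra); lra).
  assert (He1 : e < e0) by (unfold e; pose proof (Rmin_l e0 dl); lra).
  assert (He2 : e < dl) by (unfold e; pose proof (Rmin_r e0 dl); lra).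
  rewrite <- (HK e (conj He He1)).
  assert (Hne : forall x y, (Rabs (x - p) = e \/ Rabs (y - q) = e) -> (x, y) <> (p, q)).
  { intros x y [H|H] E; inversion E; subst; rewrite Rminus_diag, Rabs_R0 in H; lra. }
  assert (Hin : forall x y, Rabs (x - p) <= e -> Rabs (y - q) <= e -> Rabs (x - p) < e0 /\ Rabs (y - q) < e0 /\ Rabs (x - p) < dl /\ Rabs (y - q) < dl).
  { intros; repeat split; lra. }
  assert (Habs : forall u, - e <= u <= e -> Rabs u <= e) by (intros; apply Rabs_le; lra).
  assert (Habs2 : Rabs e = e) by (apply Rabs_pos_eq; lra).
  assert (Habs3 : Rabs (- e) = e) by (rewrite Rabs_Ropp; apply Rabs_pos_eq; lra).
  assert (Hqe1 : Rabs (q - e - q) = e) by (replace (q - e - q) with (- e) by ring; auto).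
  assert (Hqe2 : Rabs (q + e - q) = e) by (replace (q + e - q) with e by ring; auto).
  assert (Hpe1 : Rabs (p - e - p) = e) by (replace (p - e - p) with (- e) by ring; auto).
  assert (Hpe2 : Rabs (p + e - p) = e) by (replace (p + e - p) with e by ring; auto).
  assert (Hr : forall t c, c - e <= t <= c + e -> Rabs (t - c) <= e) by (intros; apply Habs; lra).
  assert (Hrng : forall t a, Rmin (a - e) (a + e) <= t <= Rmax (a - e) (a + e) -> a - e <= t <= a + e).
  { intros t a Ht. unfold Rmin, Rmax in Ht; destruct (Rle_dec (a - e) (a + e)); lra. }
  assert (E1 : Rabs (hI P (q - e) (p - e) (p + e) - 1 * l1 * PI / 2) <= 4 * eta).
  { apply (edge_lemma _ (fun x => f3 (x, q - e)) (fun x => f1 (x, q - e)) l3); auto.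
    - apply ex_hI. intros t Ht. apply Hrng, Hr in Ht.
      refine (proj1 (Hc _ _ _ _ _)); [apply Hne; right; auto|lra|lra].
    - intros t Ht. rewrite HP by (apply Hne; right; auto). f_equal; ring.
    - intros t Ht. apply Hr in Ht. apply and_comm; apply Hdl'; [apply Hne; right; auto|lra|lra]. }
  assert (E3 : Rabs (hI P (q + e) (p - e) (p + e) - (-1) * l1 * PI / 2) <= 4 * eta).
  { apply (edge_lemma _ (fun x => f3 (x, q + e)) (fun x => f1 (x, q + e)) l3); auto.
    - apply ex_hI. intros t Ht. apply Hrng, Hr in Ht.
      refine (proj1 (Hc _ _ _ _ _)); [apply Hne; right; auto|lra|lra].
    - intros t Ht. rewrite HP by (apply Hne; right; auto). f_equal; ring.
    - intros t Ht. apply Hr in Ht. apply and_comm; apply Hdl'; [apply Hne; right; auto|lra|lra]. }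
  assert (E2 : Rabs (vI Q (p + e) (q - e) (q + e) - 1 * l1 * PI / 2) <= 4 * eta).
  { apply (edge_lemma _ (fun y => f3 (p + e, y)) (fun y => f1 (p + e, y)) l3); auto.
    - apply ex_vI. intros t Ht. apply Hrng, Hr in Ht.
      refine (proj2 (Hc _ _ _ _ _)); [apply Hne; left; auto|lra|lra].
    - intros t Ht. rewrite HQ by (apply Hne; left; auto). f_equal; ring.
    - intros t Ht. apply Hr in Ht. apply and_comm; apply Hdl'; [apply Hne; left; auto|lra|lra]. }
  assert (E4 : Rabs (vI Q (p - e) (q - e) (q + e) - (-1) * l1 * PI / 2) <= 4 * eta).
  { apply (edge_lemma _ (fun y => f3 (p - e, y)) (fun y => f1 (p - e, y)) l3); auto.
    - apply ex_vI. intros t Ht. apply Hrng, Hr in Ht.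
      refine (proj2 (Hc _ _ _ _ _)); [apply Hne; left; auto|lra|lra].
    - intros t Ht. rewrite HQ by (apply Hne; left; auto). f_equal; ring.
    - intros t Ht. apply Hr in Ht. apply and_comm; apply Hdl'; [apply Hne; left; auto|lra|lra]. }
  unfold rect.
  apply Rabs_le. apply Rabs_le_between in E1, E2, E3, E4.
  split; lra.
Qed.
Lemma Cmod_ge (a b : R) : Rabs a <= Cmod (a, b) /\ Rabs b <= Cmod (a, b).
Proof.
  pose proof (Rmax_Cmod (a, b)). simpl in H.
  pose proof (Rmax_l (Rabs a) (Rabs b)). pose proof (Rmax_r (Rabs a) (Rabs b)). split; lra.
Qed.

Lemma coord_le X : Rabs (c1 X) <= Bnorm X /\ Rabs (c2 X) <= Bnorm X /\ Rabs (c3 X) <= Bnorm X /\ Rabs (c4 X) <= Bnorm X.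
Proof.
  destruct X as [[x1 x2] [x3 x4]]. unfold Bnorm, c1, c2, c3, c4, Cminus, Cplus, Copp, Cmult, Ci; simpl.
  replace (x1 + - (0 * x3 - 1 * x4)) with (x1 + x4) by ring.
  replace (x2 + - (0 * x4 + 1 * x3)) with (x2 - x3) by ring.
  replace (x1 + (0 * x3 - 1 * x4)) with (x1 - x4) by ring.
  replace (x2 + (0 * x4 + 1 * x3)) with (x2 + x3) by ring.
  destruct (Cmod_ge (x1 + x4) (x2 - x3)) as [A1 A2].
  destruct (Cmod_ge (x1 - x4) (x2 + x3)) as [B1 B2].
  set (m1 := Cmod (x1 + x4, x2 - x3)) in *. set (m2 := Cmod (x1 - x4, x2 + x3)) in *.
  assert (Rabs (x1 + x4 + (x1 - x4)) <= Rabs (x1 + x4) + Rabs (x1 - x4)) by apply Rabs_triang.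
  assert (Rabs (x1 + x4 - (x1 - x4)) <= Rabs (x1 + x4) + Rabs (x1 - x4)) by (unfold Rminus at 1; eapply Rle_trans; [apply Rabs_triang| rewrite Rabs_Ropp; lra]).
  assert (Rabs (x2 - x3 + (x2 + x3)) <= Rabs (x2 - x3) + Rabs (x2 + x3)) by apply Rabs_triang.
  assert (Rabs (x2 + x3 - (x2 - x3)) <= Rabs (x2 + x3) + Rabs (x2 - x3)) by (unfold Rminus at 1; eapply Rle_trans; [apply Rabs_triang| rewrite Rabs_Ropp; lra]).
  replace (x1 + x4 + (x1 - x4)) with (2 * x1) in H by ring.
  replace (x1 + x4 - (x1 - x4)) with (2 * x4) in H0 by ring.
  replace (x2 - x3 + (x2 + x3)) with (2 * x2) in H1 by ring.
  replace (x2 + x3 - (x2 - x3)) with (2 * x3) in H2 by ring.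
  rewrite Rabs_mult, (Rabs_pos_eq 2) in H, H0, H1, H2 by lra.
  repeat split; lra.
Qed.
Definition tends (f : Pt -> R) p q l := forall eta, 0 < eta -> exists delta, 0 < delta /\
  forall x y, (x, y) <> (p, q) -> Rabs (x - p) < delta -> Rabs (y - q) < delta -> Rabs (f (x, y) - l) <= eta.

Lemma tends_comb f g p q l1 l2 (Hf : tends f p q l1) (Hg : tends g p q l2) eta : 0 < eta ->
  exists delta, 0 < delta /\ forall x y, (x, y) <> (p, q) -> Rabs (x - p) < delta -> Rabs (y - q) < delta ->
  Rabs (f (x, y) - l1) <= eta /\ Rabs (g (x, y) - l2) <= eta.
Proof.
  intros He. destruct (Hf eta He) as [d1 [Hd1 H1]]. destruct (Hg eta He) as [d2 [Hd2 H2]].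
  exists (Rmin d1 d2). split; [apply Rmin_pos; auto|].
  intros x y Hn Hx Hy. pose proof (Rmin_l d1 d2). pose proof (Rmin_r d1 d2).
  split; [apply H1|apply H2]; auto; lra.
Qed.

Lemma tends_plus f g p q l1 l2 : tends f p q l1 -> tends g p q l2 -> tends (fun z => f z + g z) p q (l1 + l2).
Proof.
  intros Hf Hg eta He. destruct (tends_comb f g p q l1 l2 Hf Hg (eta / 2) ltac:(lra)) as [d [Hd H]].
  exists d. split; auto. intros x y Hn Hx Hy. destruct (H x y Hn Hx Hy) as [A B].
  replace (f (x, y) + g (x, y) - (l1 + l2)) with ((f (x, y) - l1) + (g (x, y) - l2)) by ring.
  eapply Rle_trans; [apply Rabs_triang|lra].
Qed.
Lemma tends_minus f g p q l1 l2 : tends f p q l1 -> tends g p q l2 -> tends (fun z => f z - g z) p q (l1 - l2).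
Proof.
  intros Hf Hg eta He. destruct (tends_comb f g p q l1 l2 Hf Hg (eta / 2) ltac:(lra)) as [d [Hd H]].
  exists d. split; auto. intros x y Hn Hx Hy. destruct (H x y Hn Hx Hy) as [A B].
  replace (f (x, y) - g (x, y) - (l1 - l2)) with ((f (x, y) - l1) + - (g (x, y) - l2)) by ring.
  eapply Rle_trans; [apply Rabs_triang|rewrite Rabs_Ropp; lra].
Qed.
Lemma tends_mult f g p q l1 l2 : tends f p q l1 -> tends g p q l2 -> tends (fun z => f z * g z) p q (l1 * l2).
Proof.
  intros Hf Hg eta He.
  set (M := Rabs l1 + Rabs l2 + 1).
  assert (HM : 1 <= M) by (unfold M; pose proof (Rabs_pos l1); pose proof (Rabs_pos l2); lra).
  set (e1 := Rmin 1 (eta / M)).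
  assert (He1 : 0 < e1) by (apply Rmin_pos; [lra| apply Rdiv_lt_0_compat; lra]).
  assert (He1a : e1 <= 1) by apply Rmin_l. assert (He1b : e1 <= eta / M) by apply Rmin_r.
  destruct (tends_comb f g p q l1 l2 Hf Hg e1 He1) as [d [Hd H]].
  exists d. split; auto. intros x y Hn Hx Hy. destruct (H x y Hn Hx Hy) as [A B].
  replace (f (x, y) * g (x, y) - l1 * l2) with ((f (x, y) - l1) * g (x, y) + l1 * (g (x, y) - l2)) by ring.
  eapply Rle_trans; [apply Rabs_triang|]. rewrite !Rabs_mult.
  assert (Rabs (g (x, y)) <= Rabs l2 + 1).
  { replace (g (x, y)) with (l2 + (g (x, y) - l2)) by ring.
    eapply Rle_trans; [apply Rabs_triang|lra]. }
  assert (Rabs (f (x, y) - l1) * Rabs (g (x, y)) <= e1 * (Rabs l2 + 1)).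
  { apply Rmult_le_compat; try apply Rabs_pos; lra. }
  assert (Rabs l1 * Rabs (g (x, y) - l2) <= Rabs l1 * e1).
  { apply Rmult_le_compat_l; [apply Rabs_pos|lra]. }
  assert (e1 * M <= eta) by (apply (Rmult_le_reg_r (/ M)); [apply Rinv_0_lt_compat; lra|];
    rewrite Rmult_assoc, Rinv_r, Rmult_1_r by lra; exact He1b).
  unfold M in *. nra.
Qed.

Lemma tends_ext f g p q l : (forall x y, (x, y) <> (p, q) -> f (x, y) = g (x, y)) -> tends f p q l -> tends g p q l.
Proof.
  intros E H eta He. destruct (H eta He) as [d [Hd H']]. exists d; split; auto.
  intros. rewrite <- E by auto. apply H'; auto.
Qed.

Lemma tends_cont g p q : continuous g (p, q) -> tends g p q (g (p, q)).
Proof.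
  intros Hc eta He. destruct (proj1 (continuous_eps g _) Hc eta He) as [r [Hr H]].
  exists r; split; auto. intros. left. apply H; auto.
Qed.

Definition tendsB (F : Pt -> B) p q (L : B) :=
  tends (fun z => c1 (F z)) p q (c1 L) /\ tends (fun z => c2 (F z)) p q (c2 L) /\
  tends (fun z => c3 (F z)) p q (c3 L) /\ tends (fun z => c4 (F z)) p q (c4 L).

Ltac tsolve := match goal with
  | |- tends (fun z => _ * _) _ _ _ => apply tends_mult; tsolve
  | |- tends (fun z => _ - _) _ _ _ => apply tends_minus; tsolve
  | |- tends (fun z => _ + _) _ _ _ => apply tends_plus; tsolve
  | _ => assumption end.

Lemma tendsB_mult F G p q L M : tendsB F p q L -> tendsB G p q M -> tendsB (fun z => Bmul (F z) (G z)) p q (Bmul L M).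
Proof.
  intros [F1 [F2 [F3 F4]]] [G1 [G2 [G3 G4]]].
  split; [|split; [|split]].
  - rewrite c1_mul. apply (tends_ext (fun z => c1 (F z) * c1 (G z) - c2 (F z) * c2 (G z) - (c3 (F z) * c3 (G z) - c4 (F z) * c4 (G z)))).
    { intros; rewrite c1_mul; reflexivity. }
    tsolve.
  - rewrite c2_mul. apply (tends_ext (fun z => c1 (F z) * c2 (G z) + c2 (F z) * c1 (G z) - (c3 (F z) * c4 (G z) + c4 (F z) * c3 (G z)))).
    { intros; rewrite c2_mul; reflexivity. }
    tsolve.
  - rewrite c3_mul. apply (tends_ext (fun z => c1 (F z) * c3 (G z) - c2 (F z) * c4 (G z) + (c3 (F z) * c1 (G z) - c4 (F z) * c2 (G z)))).
    { intros; rewrite c3_mul; reflexivity. }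
    tsolve.
  - rewrite c4_mul. apply (tends_ext (fun z => c1 (F z) * c4 (G z) + c2 (F z) * c3 (G z) + (c3 (F z) * c2 (G z) + c4 (F z) * c1 (G z)))).
    { intros; rewrite c4_mul; reflexivity. }
    tsolve.
Qed.

Lemma tendsB_cont F p q : allC1 F (p, q) -> tendsB F p q (F (p, q)).
Proof.
  intros H. repeat split; apply (tends_cont (fun z => _ (F z))); apply C1_cont, H; simpl; tauto.
Qed.

Lemma distj_small x y p q d : Rabs (x - p) < d / 2 -> Rabs (y - q) < d / 2 -> distj (x, y) (p, q) < d.
Proof.
  intros Hx Hy. unfold distj, absj; simpl.
  assert (0 < d) by (pose proof (Rabs_pos (x - p)); lra).
  rewrite <- (sqrt_pow2 d) by lra. apply sqrt_lt_1_alt. split.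
  - pose proof (pow2_ge_0 (x - p)). pose proof (pow2_ge_0 (y - q)). lra.
  - apply Rabs_def2 in Hx. apply Rabs_def2 in Hy. simpl. nra.
Qed.

Lemma tendsB_lim F p q L : Blim_at F (p, q) L -> tendsB F p q L.
Proof.
  intros H.
  assert (K : forall eta, 0 < eta -> exists d, 0 < d /\ forall x y, (x, y) <> (p, q) -> Rabs (x - p) < d -> Rabs (y - q) < d ->
     Bnorm (Bsub (F (x, y)) L) < eta).
  { intros eta He. destruct (H eta He) as [d [Hd H']]. exists (d / 2). split; [lra|].
    intros x y Hn Hx Hy. apply H'; auto. apply distj_small; auto. }
  assert (C : forall X Y, c1 (Bsub X Y) = c1 X - c1 Y /\ c2 (Bsub X Y) = c2 X - c2 Y /\
                          c3 (Bsub X Y) = c3 X - c3 Y /\ c4 (Bsub X Y) = c4 X - c4 Y).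
  { intros [[? ?] [? ?]] [[? ?] [? ?]]. unfold Bsub, Badd, Bopp, c1, c2, c3, c4; simpl. repeat split; ring. }
  repeat split; intros eta He; destruct (K eta He) as [d [Hd H']]; exists d; split; auto;
    intros x y Hn Hx Hy; specialize (H' x y Hn Hx Hy);
    destruct (coord_le (Bsub (F (x, y)) L)) as [A1 [A2 [A3 A4]]];
    destruct (C (F (x, y)) L) as [C1 [C2 [C3 C4]]]; rewrite C1 in A1; rewrite C2 in A2; rewrite C3 in A3; rewrite C4 in A4; lra.
Qed.
Lemma pole_rect (P Q f1 f3 : Pt -> R) p q l1 l3 a b c d delta :
  a < p < b -> c < q < d -> 0 < delta ->
  (forall x y, a - delta < x < b + delta -> c - delta < y < d + delta -> (x, y) <> (p, q) -> goodPQ P Q (x, y)) ->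
  (forall x y, (x, y) <> (p, q) -> P (x, y) = ((x - p) * f3 (x, y) - (y - q) * f1 (x, y)) / ((x - p) ^ 2 + (y - q) ^ 2)) ->
  (forall x y, (x, y) <> (p, q) -> Q (x, y) = ((x - p) * f1 (x, y) + (y - q) * f3 (x, y)) / ((x - p) ^ 2 + (y - q) ^ 2)) ->
  tends f1 p q l1 -> tends f3 p q l3 ->
  rect P Q a b c d = 2 * PI * l1.
Proof.
  intros Hp Hq Hd Hg HP HQ T1 T3.
  set (e0 := Rmin (Rmin (p - a) (b - p)) (Rmin (q - c) (d - q))).
  assert (He0 : 0 < e0) by (unfold e0; repeat apply Rmin_pos; lra).
  assert (Hm1 : e0 <= Rmin (p - a) (b - p)) by apply Rmin_l.
  assert (Hm2 : e0 <= Rmin (q - c) (d - q)) by apply Rmin_r.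
  pose proof (Rmin_l (p - a) (b - p)). pose proof (Rmin_r (p - a) (b - p)).
  pose proof (Rmin_l (q - c) (d - q)). pose proof (Rmin_r (q - c) (d - q)).
  apply (residue P Q f1 f3 p q l1 l3 _ e0); auto.
  - intros eta He. apply (tends_comb f1 f3 p q l1 l3 T1 T3 eta He).
  - intros x y Hn Hx Hy. apply Rabs_def2 in Hx. apply Rabs_def2 in Hy.
    assert (goodPQ P Q (x, y)) as [A1 [A2 _]] by (apply Hg; auto; lra). split; auto.
  - intros e He. symmetry. apply (rect_hole P Q a b c d p q e delta); auto. all: lra.
Qed.

Lemma absj_ge x y : Rabs x <= absj (x, y) /\ Rabs y <= absj (x, y).
Proof.
  unfold absj; cbn [fst snd]. pose proof (sqrt_plus_sqr x y) as [H _].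
  pose proof (Rmax_l (Rabs x) (Rabs y)). pose proof (Rmax_r (Rabs x) (Rabs y)). split; lra.
Qed.

Lemma edge_bound (g : R -> R) R C : 0 < R -> 0 <= C -> ex_RInt g (- R) R ->
  (forall t, - R <= t <= R -> Rabs (g t) <= C / R ^ 2) -> Rabs (RInt g (- R) R) <= 2 * C / R.
Proof.
  intros HR HC Hex Hb. replace (2 * C / R) with ((R - - R) * (C / R ^ 2)) by (field; lra).
  apply abs_RInt_le_const; auto; lra.
Qed.

Lemma decay_rect (P Q : Pt -> R) C R0 R : 0 <= C -> 0 < R -> R0 < R ->
  (forall z, R0 < absj z -> Rabs (P z) <= C / absj z ^ 2 /\ Rabs (Q z) <= C / absj z ^ 2) ->
  (forall t, - R <= t <= R -> C1pt P (t, - R) /\ C1pt P (t, R) /\ C1pt Q (R, t) /\ C1pt Q (- R, t)) ->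
  Rabs (rect P Q (- R) R (- R) R) <= 8 * C / R.
Proof.
  intros HC HR HR0 Hb Hc.
  assert (Hb' : forall x y, (Rabs x = R \/ Rabs y = R) -> Rabs (P (x, y)) <= C / R ^ 2 /\ Rabs (Q (x, y)) <= C / R ^ 2).
  { intros x y Hxy. destruct (absj_ge x y) as [A1 A2].
    assert (HA : R <= absj (x, y)) by (destruct Hxy; lra).
    destruct (Hb (x, y)) as [B1 B2]; [lra|].
    assert (C / absj (x, y) ^ 2 <= C / R ^ 2).
    { unfold Rdiv. apply Rmult_le_compat_l; auto. apply Rinv_le_contravar. apply pow_lt; lra.
      apply pow_incr; lra. }
    split; lra. }
  assert (HRR : Rabs R = R) by (apply Rabs_pos_eq; lra).
  assert (HRR' : Rabs (- R) = R) by (rewrite Rabs_Ropp; auto).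
  assert (Hrng : forall t, Rmin (- R) R <= t <= Rmax (- R) R -> - R <= t <= R).
  { intros t Ht. unfold Rmin, Rmax in Ht. destruct (Rle_dec (- R) R); lra. }
  assert (E1 : Rabs (hI P (- R) (- R) R) <= 2 * C / R).
  { apply edge_bound; auto. apply ex_hI; intros t Ht; apply Hc, Hrng; auto.
    intros t Ht; apply Hb'; auto. }
  assert (E2 : Rabs (hI P R (- R) R) <= 2 * C / R).
  { apply edge_bound; auto. apply ex_hI; intros t Ht; apply Hc, Hrng; auto.
    intros t Ht; apply Hb'; auto. }
  assert (E3 : Rabs (vI Q R (- R) R) <= 2 * C / R).
  { apply edge_bound; auto. apply ex_vI; intros t Ht; apply Hc, Hrng; auto.
    intros t Ht; apply Hb'; auto. }
  assert (E4 : Rabs (vI Q (- R) (- R) R) <= 2 * C / R).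
  { apply edge_bound; auto. apply ex_vI; intros t Ht; apply Hc, Hrng; auto.
    intros t Ht; apply Hb'; auto. }
  unfold rect. apply Rabs_le. apply Rabs_le_between in E1, E2, E3, E4. split; lra.
Qed.

Lemma decay_zero S C R0 : 0 <= C -> (forall R, R0 < R -> 1 < R -> Rabs S <= 8 * C / R) -> S = 0.
Proof.
  intros HC H. destruct (Req_dec S 0) as [E|E]; auto.
  assert (HS : 0 < Rabs S) by (apply Rabs_pos_lt; auto).
  set (R := Rmax (Rmax R0 1) (16 * C / Rabs S) + 1).
  assert (H1 : Rmax R0 1 <= Rmax (Rmax R0 1) (16 * C / Rabs S)) by apply Rmax_l.
  assert (H2 : 16 * C / Rabs S <= Rmax (Rmax R0 1) (16 * C / Rabs S)) by apply Rmax_r.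
  pose proof (Rmax_l R0 1). pose proof (Rmax_r R0 1).
  specialize (H R ltac:(unfold R; lra) ltac:(unfold R; lra)).
  assert (HR : 0 < R) by (unfold R; lra).
  assert (E5 : 8 * C / R * R = 8 * C) by (field; lra).
  assert (E6 : Rabs S * R <= 8 * C) by (rewrite <- E5; apply Rmult_le_compat_r; lra).
  assert (E7 : 16 * C / Rabs S * Rabs S = 16 * C) by (field; lra).
  assert (E8 : 16 * C / Rabs S * Rabs S <= R * Rabs S) by (apply Rmult_le_compat_r; unfold R; lra).
  nra.
Qed.
Definition formP (P f1 f3 : Pt -> R) p q := forall x y, (x, y) <> (p, q) ->
  P (x, y) = ((x - p) * f3 (x, y) - (y - q) * f1 (x, y)) / ((x - p) ^ 2 + (y - q) ^ 2).
Definition formQ (Q f1 f3 : Pt -> R) p q := forall x y, (x, y) <> (p, q) ->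
  Q (x, y) = ((x - p) * f1 (x, y) + (y - q) * f3 (x, y)) / ((x - p) ^ 2 + (y - q) ^ 2).

Lemma split_x_helper (P Q fl1 fl3 fr1 fr3 : Pt -> R) pl ql pr qr ll1 ll3 lr1 lr3 R :
  pl < pr ->
  (forall z, z <> (pl, ql) -> z <> (pr, qr) -> goodPQ P Q z) ->
  formP P fl1 fl3 pl ql -> formQ Q fl1 fl3 pl ql -> tends fl1 pl ql ll1 -> tends fl3 pl ql ll3 ->
  formP P fr1 fr3 pr qr -> formQ Q fr1 fr3 pr qr -> tends fr1 pr qr lr1 -> tends fr3 pr qr lr3 ->
  Rabs pl < R -> Rabs pr < R -> Rabs ql < R -> Rabs qr < R ->
  rect P Q (- R) R (- R) R = 2 * PI * (ll1 + lr1).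
Proof.
  intros Hlr Hg HPl HQl Tl1 Tl3 HPr HQr Tr1 Tr3 B1 B2 B3 B4.
  apply Rabs_def2 in B1, B2, B3, B4.
  set (m := (pl + pr) / 2). set (dl := (pr - pl) / 4).
  assert (Hline : forall y x0 x1, (y = - R \/ y = R) -> ex_RInt (fun x => P (x, y)) x0 x1).
  { intros y x0 x1 Hy. apply ex_hI. intros t Ht. apply Hg; intros E; inversion E; lra. }
  rewrite (rect_split_x P Q (- R) m R (- R) R) by (apply Hline; auto).
  rewrite Rmult_plus_distr_l. f_equal.
  - apply (pole_rect P Q fl1 fl3 pl ql ll1 ll3 _ _ _ _ dl); unfold m, dl in *; try lra; auto.
    intros x y Hx Hy Hn. apply Hg; auto. intros E; inversion E; lra.
  - apply (pole_rect P Q fr1 fr3 pr qr lr1 lr3 _ _ _ _ dl); unfold m, dl in *; try lra; auto.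
    intros x y Hx Hy Hn. apply Hg; auto. intros E; inversion E; lra.
Qed.

Lemma split_y_helper (P Q fl1 fl3 fr1 fr3 : Pt -> R) pl ql pr qr ll1 ll3 lr1 lr3 R :
  ql < qr ->
  (forall z, z <> (pl, ql) -> z <> (pr, qr) -> goodPQ P Q z) ->
  formP P fl1 fl3 pl ql -> formQ Q fl1 fl3 pl ql -> tends fl1 pl ql ll1 -> tends fl3 pl ql ll3 ->
  formP P fr1 fr3 pr qr -> formQ Q fr1 fr3 pr qr -> tends fr1 pr qr lr1 -> tends fr3 pr qr lr3 ->
  Rabs pl < R -> Rabs pr < R -> Rabs ql < R -> Rabs qr < R ->
  rect P Q (- R) R (- R) R = 2 * PI * (ll1 + lr1).
Proof.
  intros Hlr Hg HPl HQl Tl1 Tl3 HPr HQr Tr1 Tr3 B1 B2 B3 B4.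
  apply Rabs_def2 in B1, B2, B3, B4.
  set (m := (ql + qr) / 2). set (dl := (qr - ql) / 4).
  assert (Hline : forall x y0 y1, (x = - R \/ x = R) -> ex_RInt (fun y => Q (x, y)) y0 y1).
  { intros x y0 y1 Hx. apply ex_vI. intros t Ht. apply Hg; intros E; inversion E; lra. }
  rewrite (rect_split_y P Q (- R) R (- R) m R) by (apply Hline; auto).
  rewrite Rmult_plus_distr_l. f_equal.
  - apply (pole_rect P Q fl1 fl3 pl ql ll1 ll3 _ _ _ _ dl); unfold m, dl in *; try lra; auto.
    intros x y Hx Hy Hn. apply Hg; auto. intros E; inversion E; lra.
  - apply (pole_rect P Q fr1 fr3 pr qr lr1 lr3 _ _ _ _ dl); unfold m, dl in *; try lra; auto.
    intros x y Hx Hy Hn. apply Hg; auto. intros E; inversion E; lra.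
Qed.

Lemma two_poles (P Q fa1 fa3 fb1 fb3 : Pt -> R) pa qa pb qb la1 la3 lb1 lb3 R :
  (pa, qa) <> (pb, qb) ->
  (forall z, z <> (pa, qa) -> z <> (pb, qb) -> goodPQ P Q z) ->
  formP P fa1 fa3 pa qa -> formQ Q fa1 fa3 pa qa -> tends fa1 pa qa la1 -> tends fa3 pa qa la3 ->
  formP P fb1 fb3 pb qb -> formQ Q fb1 fb3 pb qb -> tends fb1 pb qb lb1 -> tends fb3 pb qb lb3 ->
  Rabs pa < R -> Rabs pb < R -> Rabs qa < R -> Rabs qb < R ->
  rect P Q (- R) R (- R) R = 2 * PI * (la1 + lb1).
Proof.
  intros Hne Hg H1 H2 H3 H4 H5 H6 H7 H8 H9 H10 H11 H12.
  destruct (Rtotal_order pa pb) as [H|[H|H]].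
  - eapply split_x_helper; eauto.
  - subst pb. destruct (Rtotal_order qa qb) as [H'|[H'|H']].
    + eapply split_y_helper; eauto.
    + subst; congruence.
    + rewrite Rplus_comm. eapply split_y_helper; eauto.
  - rewrite Rplus_comm. eapply split_x_helper; eauto.
Qed.
Lemma open_neq (z p : Pt) : p <> z -> locally p (fun q => q <> z).
Proof.
  intros H. apply locally_pt_iff. destruct p as [x0 y0], z as [zx zy].
  destruct (Req_dec x0 zx) as [Ex|Ex].
  - assert (Ey : y0 <> zy) by (intros Ey; subst; apply H; reflexivity).
    exists (Rabs (y0 - zy)). split; [apply Rabs_pos_lt; lra|].
    intros x y _ Hy E. injection E as E1 E2. subst x y. simpl in Hy. rewrite Rabs_minus_sym in Hy. lra.
  - exists (Rabs (x0 - zx)). split; [apply Rabs_pos_lt; lra|].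
    intros x y Hx _ E. injection E as E1 E2. subst x y. simpl in Hx. rewrite Rabs_minus_sym in Hx. lra.
Qed.

Lemma inv_form G0 x y p q : (x, y) <> (p, q) ->
  let F0 := Bmul (Bsub (toB (x, y)) (toB (p, q))) G0 in
  c3 G0 = ((x - p) * c3 F0 - (y - q) * c1 F0) / ((x - p) ^ 2 + (y - q) ^ 2) /\
  c1 G0 = ((x - p) * c1 F0 + (y - q) * c3 F0) / ((x - p) ^ 2 + (y - q) ^ 2) /\
  c4 G0 = ((x - p) * c4 F0 - (y - q) * c2 F0) / ((x - p) ^ 2 + (y - q) ^ 2) /\
  c2 G0 = ((x - p) * c2 F0 + (y - q) * c4 F0) / ((x - p) ^ 2 + (y - q) ^ 2).
Proof.
  intros Hn F0.
  assert (Hd : (x - p) ^ 2 + (y - q) ^ 2 <> 0).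
  { intros E. pose proof (pow2_ge_0 (x - p)). pose proof (pow2_ge_0 (y - q)).
    assert (E1 : (x - p) ^ 2 = 0) by lra. assert (E2 : (y - q) ^ 2 = 0) by lra.
    simpl in E1, E2. rewrite Rmult_1_r in E1, E2. apply Rsqr_0_uniq in E1. apply Rsqr_0_uniq in E2. apply Hn. f_equal; lra. }
  unfold F0. destruct G0 as [[g1 g2] [g3 g4]].
  unfold c1, c2, c3, c4, Bmul, Bsub, Badd, Bopp, toB; simpl.
  repeat split; field; intro E; apply Hd;
    replace ((x - p) ^ 2 + (y - q) ^ 2) with ((x - p) * (x - p) + (y - q) * (y - q)) by ring; exact E.
Qed.

Lemma cmul_bound X Y : Rabs (c1 (Bmul X Y)) <= 4 * Bnorm X * Bnorm Y /\ Rabs (c2 (Bmul X Y)) <= 4 * Bnorm X * Bnorm Y /\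
  Rabs (c3 (Bmul X Y)) <= 4 * Bnorm X * Bnorm Y /\ Rabs (c4 (Bmul X Y)) <= 4 * Bnorm X * Bnorm Y.
Proof.
  rewrite c1_mul, c2_mul, c3_mul, c4_mul.
  destruct (coord_le X) as [X1 [X2 [X3 X4]]]. destruct (coord_le Y) as [Y1 [Y2 [Y3 Y4]]].
  assert (P : forall u v, Rabs u <= Bnorm X -> Rabs v <= Bnorm Y -> Rabs (u * v) <= Bnorm X * Bnorm Y).
  { intros u v Hu Hv. rewrite Rabs_mult. apply Rmult_le_compat; auto; apply Rabs_pos. }
  assert (T : forall a b c d, Rabs (a + b + (c + d)) <= Rabs a + Rabs b + Rabs c + Rabs d).
  { intros. eapply Rle_trans; [apply Rabs_triang|]. pose proof (Rabs_triang a b). pose proof (Rabs_triang c d). lra. }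
  assert (N : forall a, Rabs (- a) = Rabs a) by (intros; apply Rabs_Ropp).
  repeat split.
  - replace (c1 X * c1 Y - c2 X * c2 Y - (c3 X * c3 Y - c4 X * c4 Y)) with
      (c1 X * c1 Y + - (c2 X * c2 Y) + (- (c3 X * c3 Y) + c4 X * c4 Y)) by ring.
    eapply Rle_trans; [apply T|]. rewrite !N.
    pose proof (P _ _ X1 Y1). pose proof (P _ _ X2 Y2). pose proof (P _ _ X3 Y3). pose proof (P _ _ X4 Y4). lra.
  - replace (c1 X * c2 Y + c2 X * c1 Y - (c3 X * c4 Y + c4 X * c3 Y)) with
      (c1 X * c2 Y + c2 X * c1 Y + (- (c3 X * c4 Y) + - (c4 X * c3 Y))) by ring.
    eapply Rle_trans; [apply T|]. rewrite !N.
    pose proof (P _ _ X1 Y2). pose proof (P _ _ X2 Y1). pose proof (P _ _ X3 Y4). pose proof (P _ _ X4 Y3). lra.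
  - replace (c1 X * c3 Y - c2 X * c4 Y + (c3 X * c1 Y - c4 X * c2 Y)) with
      (c1 X * c3 Y + - (c2 X * c4 Y) + (c3 X * c1 Y + - (c4 X * c2 Y))) by ring.
    eapply Rle_trans; [apply T|]. rewrite !N.
    pose proof (P _ _ X1 Y3). pose proof (P _ _ X2 Y4). pose proof (P _ _ X3 Y1). pose proof (P _ _ X4 Y2). lra.
  - eapply Rle_trans; [apply T|].
    pose proof (P _ _ X1 Y4). pose proof (P _ _ X2 Y3). pose proof (P _ _ X3 Y2). pose proof (P _ _ X4 Y1). lra.
Qed.

Lemma bigO_bound W : bigO_inv W -> exists M R0, 0 <= M /\ forall z, R0 < absj z -> Bnorm (W z) <= M / absj z.
Proof.
  intros [M [R0 H]]. exists (Rabs M), (Rmax R0 0). split; [apply Rabs_pos|].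
  intros z Hz. pose proof (Rmax_l R0 0). pose proof (Rmax_r R0 0).
  specialize (H z ltac:(lra)).
  apply (Rmult_le_reg_l (absj z)); [lra|]. field_simplify; [|lra].
  pose proof (Rle_abs M). lra.
Qed.

Lemma B_ext X Y : c1 X = c1 Y -> c2 X = c2 Y -> c3 X = c3 Y -> c4 X = c4 Y -> X = Y.
Proof.
  destruct X as [[? ?] [? ?]], Y as [[? ?] [? ?]]. unfold c1, c2, c3, c4; simpl. intros; subst; reflexivity.
Qed.
Lemma Bmul_assoc X Y Z : Bmul X (Bmul Y Z) = Bmul (Bmul X Y) Z.
Proof. apply B_ext; rewrite ?c1_mul, ?c2_mul, ?c3_mul, ?c4_mul; rewrite ?c1_mul, ?c2_mul, ?c3_mul, ?c4_mul; ring. Qed.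
Lemma Bmul_comm X Y : Bmul X Y = Bmul Y X.
Proof. apply B_ext; rewrite ?c1_mul, ?c2_mul, ?c3_mul, ?c4_mul; ring. Qed.
Section Main.
Variables (a b W V : Pt -> B) (p0 q0 p1 q1 : R) (A Bv : B).
Hypotheses (Hne : (p0, q0) <> (p1, q1))
  (HW : vekua_solution a b (fun z => z <> (p1, q1)) W)
  (HV : vekua_solution (fun p => Bopp (a p)) (fun p => Bopp (Bconj (b p))) (fun z => z <> (p0, q0)) V)
  (LW : Blim_at (fun z => Bmul (Bsub (toB z) (toB (p1, q1))) (W z)) (p1, q1) A)
  (LV : Blim_at (fun z => Bmul (Bsub (toB z) (toB (p0, q0))) (V z)) (p0, q0) Bv)
  (DW : bigO_inv W) (DV : bigO_inv V).

Let G := fun z => Bmul (W z) (V z).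
Let F1 := fun z => Bmul (Bsub (toB z) (toB (p1, q1))) (G z).
Let F0 := fun z => Bmul (Bsub (toB z) (toB (p0, q0))) (G z).

Lemma allW z : z <> (p1, q1) -> allC1 W z.
Proof. intros H. apply (allC1_of (fun z => z <> (p1, q1))); auto. apply HW. intros; apply open_neq; auto. Qed.
Lemma allV z : z <> (p0, q0) -> allC1 V z.
Proof. intros H. apply (allC1_of (fun z => z <> (p0, q0))); auto. apply HV. intros; apply open_neq; auto. Qed.

Lemma good1 z : z <> (p0, q0) -> z <> (p1, q1) ->
  goodPQ (fun z => c3 (G z)) (fun z => c1 (G z)) z /\ goodPQ (fun z => c4 (G z)) (fun z => c2 (G z)) z.
Proof.
  intros H0 H1. pose proof (allW z H1) as AW. pose proof (allV z H0) as AV.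
  pose proof (proj2 HW z H1) as EW. pose proof (proj2 HV z H0) as EV.
  unfold G. split; split.
  - apply C1_P1; auto.
  - split; [apply C1_Q1; auto| apply (closed_1 W V z AW AV a b); auto].
  - apply C1_P2; auto.
  - split; [apply C1_Q2; auto| apply (closed_2 W V z AW AV a b); auto].
Qed.

Lemma forms1 :
  formP (fun z => c3 (G z)) (fun z => c1 (F1 z)) (fun z => c3 (F1 z)) p1 q1 /\
  formQ (fun z => c1 (G z)) (fun z => c1 (F1 z)) (fun z => c3 (F1 z)) p1 q1 /\
  formP (fun z => c4 (G z)) (fun z => c2 (F1 z)) (fun z => c4 (F1 z)) p1 q1 /\
  formQ (fun z => c2 (G z)) (fun z => c2 (F1 z)) (fun z => c4 (F1 z)) p1 q1.
Proof.
  unfold formP, formQ, F1. repeat split; intros x y Hn; destruct (inv_form (G (x, y)) x y p1 q1 Hn) as [E1 [E2 [E3 E4]]]; auto.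
Qed.
Lemma forms0 :
  formP (fun z => c3 (G z)) (fun z => c1 (F0 z)) (fun z => c3 (F0 z)) p0 q0 /\
  formQ (fun z => c1 (G z)) (fun z => c1 (F0 z)) (fun z => c3 (F0 z)) p0 q0 /\
  formP (fun z => c4 (G z)) (fun z => c2 (F0 z)) (fun z => c4 (F0 z)) p0 q0 /\
  formQ (fun z => c2 (G z)) (fun z => c2 (F0 z)) (fun z => c4 (F0 z)) p0 q0.
Proof.
  unfold formP, formQ, F0. repeat split; intros x y Hn; destruct (inv_form (G (x, y)) x y p0 q0 Hn) as [E1 [E2 [E3 E4]]]; auto.
Qed.

Lemma tends1 : tendsB F1 p1 q1 (Bmul A (V (p1, q1))).
Proof.
  replace F1 with (fun z => Bmul (Bmul (Bsub (toB z) (toB (p1, q1))) (W z)) (V z)).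
  2:{ apply FunctionalExtensionality.functional_extensionality. intros z. unfold F1, G. rewrite Bmul_assoc. reflexivity. }
  apply (tendsB_mult (fun z => Bmul (Bsub (toB z) (toB (p1, q1))) (W z)) V).
  - apply tendsB_lim, LW.
  - apply tendsB_cont, allV. intros E; apply Hne; auto.
Qed.
Lemma tends0 : tendsB F0 p0 q0 (Bmul (W (p0, q0)) Bv).
Proof.
  replace F0 with (fun z => Bmul (W z) (Bmul (Bsub (toB z) (toB (p0, q0))) (V z))).
  2:{ apply FunctionalExtensionality.functional_extensionality. intros z. unfold F0, G.
      rewrite Bmul_assoc, (Bmul_comm (W z) (Bsub (toB z) (toB (p0, q0)))), <- Bmul_assoc. reflexivity. }
  apply (tendsB_mult W (fun z => Bmul (Bsub (toB z) (toB (p0, q0))) (V z))).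
  - apply tendsB_cont, allW. auto.
  - apply tendsB_lim, LV.
Qed.

Lemma decayG : exists C R0, 0 <= C /\ forall z, R0 < absj z ->
  Rabs (c1 (G z)) <= C / absj z ^ 2 /\ Rabs (c2 (G z)) <= C / absj z ^ 2 /\
  Rabs (c3 (G z)) <= C / absj z ^ 2 /\ Rabs (c4 (G z)) <= C / absj z ^ 2.
Proof.
  destruct (bigO_bound W DW) as [M1 [R1 [HM1 H1]]]. destruct (bigO_bound V DV) as [M2 [R2 [HM2 H2]]].
  exists (4 * M1 * M2), (Rmax (Rmax R1 R2) 0). split; [nra|].
  intros z Hz. pose proof (Rmax_l (Rmax R1 R2) 0). pose proof (Rmax_r (Rmax R1 R2) 0).
  pose proof (Rmax_l R1 R2). pose proof (Rmax_r R1 R2).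
  assert (Ha : 0 < absj z) by lra.
  specialize (H1 z ltac:(lra)). specialize (H2 z ltac:(lra)).
  assert (HB : 4 * Bnorm (W z) * Bnorm (V z) <= 4 * M1 * M2 / absj z ^ 2).
  { replace (4 * M1 * M2 / absj z ^ 2) with (4 * (M1 / absj z) * (M2 / absj z)) by (field; lra).
    destruct (coord_le (W z)) as [X _]. destruct (coord_le (V z)) as [Y _].
    pose proof (Rabs_pos (c1 (W z))). pose proof (Rabs_pos (c1 (V z))).
    apply Rmult_le_compat; try nra. }
  unfold G. destruct (cmul_bound (W z) (V z)) as [B1 [B2 [B3 B4]]]. repeat split; lra.
Qed.

Lemma main_sum : c1 (Bmul A (V (p1, q1))) + c1 (Bmul (W (p0, q0)) Bv) = 0 /\
                 c2 (Bmul A (V (p1, q1))) + c2 (Bmul (W (p0, q0)) Bv) = 0.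
Proof.
  destruct forms1 as [P1 [Q1 [P2 Q2]]]. destruct forms0 as [P01 [Q01 [P02 Q02]]].
  destruct tends1 as [T11 [T12 [T13 T14]]]. destruct tends0 as [T01 [T02 [T03 T04]]].
  destruct decayG as [C [R0 [HC HD]]].
  set (Rb := Rmax (Rmax (Rabs p0) (Rabs q0)) (Rmax (Rabs p1) (Rabs q1))).
  assert (Hg : forall z, z <> (p0, q0) -> z <> (p1, q1) ->
    goodPQ (fun z => c3 (G z)) (fun z => c1 (G z)) z /\ goodPQ (fun z => c4 (G z)) (fun z => c2 (G z)) z)
    by apply good1.
  assert (HRb : forall R, Rb < R -> Rabs p0 < R /\ Rabs q0 < R /\ Rabs p1 < R /\ Rabs q1 < R).
  { intros R HR. unfold Rb in HR.
    pose proof (Rmax_l (Rmax (Rabs p0) (Rabs q0)) (Rmax (Rabs p1) (Rabs q1))).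
    pose proof (Rmax_r (Rmax (Rabs p0) (Rabs q0)) (Rmax (Rabs p1) (Rabs q1))).
    pose proof (Rmax_l (Rabs p0) (Rabs q0)). pose proof (Rmax_r (Rabs p0) (Rabs q0)).
    pose proof (Rmax_l (Rabs p1) (Rabs q1)). pose proof (Rmax_r (Rabs p1) (Rabs q1)).
    repeat split; lra. }
  assert (Hedge : forall R, Rb < R -> forall x y, (Rabs x = R \/ Rabs y = R) -> (x, y) <> (p0, q0) /\ (x, y) <> (p1, q1)).
  { intros R HR x y Hxy. destruct (HRb R HR) as [A1 [A2 [A3 A4]]].
    split; intros E; injection E as E1 E2; subst; lra. }
  assert (HPI : PI <> 0) by (pose proof PI_RGT_0; lra).
  split.
  - assert (S : 2 * PI * (c1 (Bmul (W (p0, q0)) Bv) + c1 (Bmul A (V (p1, q1)))) = 0).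
    { apply (decay_zero _ C (Rmax R0 Rb)); auto.
      intros R HR HR1. pose proof (Rmax_l R0 Rb). pose proof (Rmax_r R0 Rb).
      destruct (HRb R ltac:(lra)) as [A1 [A2 [A3 A4]]].
      rewrite <- (two_poles (fun z => c3 (G z)) (fun z => c1 (G z)) (fun z => c1 (F0 z)) (fun z => c3 (F0 z)) (fun z => c1 (F1 z)) (fun z => c3 (F1 z)) p0 q0 p1 q1 (c1 (Bmul (W (p0, q0)) Bv)) (c3 (Bmul (W (p0, q0)) Bv)) (c1 (Bmul A (V (p1, q1)))) (c3 (Bmul A (V (p1, q1)))) R Hne); auto.
      2:{ intros z Z0 Z1; apply (proj1 (Hg z Z0 Z1)). }
      apply (decay_rect _ _ C R0 R); try lra.
      + intros z Hz. destruct (HD z Hz) as [D1 [D2 [D3 D4]]]. split; auto.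
      + intros t Ht. assert (HRR : Rabs R = R) by (apply Rabs_pos_eq; lra).
        assert (HRR' : Rabs (- R) = R) by (rewrite Rabs_Ropp; auto).
        assert (Hgood : forall x y, (Rabs x = R \/ Rabs y = R) ->
          C1pt (fun z => c3 (G z)) (x, y) /\ C1pt (fun z => c1 (G z)) (x, y)).
        { intros x y Hxy. destruct (Hedge R ltac:(lra) x y Hxy) as [Z0 Z1].
          destruct (proj1 (Hg (x, y) Z0 Z1)) as [K1 [K2 _]]. split; assumption. }
        split; [|split; [|split]].
        * apply Hgood. right; auto.
        * apply Hgood. right; auto.
        * apply Hgood. left; auto.
        * apply Hgood. left; auto. }
    assert (2 * PI <> 0) by lra.
    apply Rmult_integral in S. destruct S as [S|S]; [lra|]. lra.
  - assert (S : 2 * PI * (c2 (Bmul (W (p0, q0)) Bv) + c2 (Bmul A (V (p1, q1)))) = 0).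
    { apply (decay_zero _ C (Rmax R0 Rb)); auto.
      intros R HR HR1. pose proof (Rmax_l R0 Rb). pose proof (Rmax_r R0 Rb).
      destruct (HRb R ltac:(lra)) as [A1 [A2 [A3 A4]]].
      rewrite <- (two_poles (fun z => c4 (G z)) (fun z => c2 (G z)) (fun z => c2 (F0 z)) (fun z => c4 (F0 z)) (fun z => c2 (F1 z)) (fun z => c4 (F1 z)) p0 q0 p1 q1 (c2 (Bmul (W (p0, q0)) Bv)) (c4 (Bmul (W (p0, q0)) Bv)) (c2 (Bmul A (V (p1, q1)))) (c4 (Bmul A (V (p1, q1)))) R Hne); auto.
      2:{ intros z Z0 Z1; apply (proj2 (Hg z Z0 Z1)). }
      apply (decay_rect _ _ C R0 R); try lra.
      + intros z Hz. destruct (HD z Hz) as [D1 [D2 [D3 D4]]]. split; auto.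
      + intros t Ht. assert (HRR : Rabs R = R) by (apply Rabs_pos_eq; lra).
        assert (HRR' : Rabs (- R) = R) by (rewrite Rabs_Ropp; auto).
        assert (Hgood : forall x y, (Rabs x = R \/ Rabs y = R) ->
          C1pt (fun z => c4 (G z)) (x, y) /\ C1pt (fun z => c2 (G z)) (x, y)).
        { intros x y Hxy. destruct (Hedge R ltac:(lra) x y Hxy) as [Z0 Z1].
          destruct (proj2 (Hg (x, y) Z0 Z1)) as [K1 [K2 _]]. split; assumption. }
        split; [|split; [|split]].
        * apply Hgood. right; auto.
        * apply Hgood. right; auto.
        * apply Hgood. left; auto.
        * apply Hgood. left; auto. }
    assert (2 * PI <> 0) by lra.
    apply Rmult_integral in S. destruct S as [S|S]; [lra|]. lra.
Qed.
End Main.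
Theorem mainTheorem4 (a b : Pt -> B) (Z1 Zj Zh1 Zhj : Pt -> Pt -> B) :
  holder_continuous a -> holder_continuous b ->
  cauchy_kernel a b Z1 Zj ->
  cauchy_kernel (fun p => Bopp (a p)) (fun p => Bopp (Bconj (b p))) Zh1 Zhj ->
  kernel_decay Z1 Zj ->
  kernel_decay Zh1 Zhj ->
  forall z0 z : Pt, z <> z0 ->
    Zh1 z0 z = Badd (Bopp (mkB (Sc (Z1 z z0)) (RtoC 0)))
                    (Bmul Bj (mkB (Sc (Zj z z0)) (RtoC 0))) /\
    Zhj z0 z = Bsub (mkB (Vec (Z1 z z0)) (RtoC 0))
                    (Bmul Bj (mkB (Vec (Zj z z0)) (RtoC 0))).
Proof.
  intros _ _ K Kh D Dh z0 z Hn.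
  destruct z0 as [p0 q0], z as [p1 q1].
  assert (Hne : (p0, q0) <> (p1, q1)) by (intros E; apply Hn; auto).
  destruct (K (p1, q1)) as [VW1 [VWj [LW1 LWj]]].
  destruct (Kh (p0, q0)) as [VV1 [VVj [LV1 LVj]]].
  destruct (D (p1, q1)) as [DW1 DWj]. destruct (Dh (p0, q0)) as [DV1 DVj].
  destruct (main_sum a b (Z1 (p1, q1)) (Zh1 (p0, q0)) p0 q0 p1 q1 B1 B1 Hne VW1 VV1 LW1 LV1 DW1 DV1) as [E11 E12].
  destruct (main_sum a b (Zj (p1, q1)) (Zh1 (p0, q0)) p0 q0 p1 q1 Bj B1 Hne VWj VV1 LWj LV1 DWj DV1) as [E21 E22].
  destruct (main_sum a b (Z1 (p1, q1)) (Zhj (p0, q0)) p0 q0 p1 q1 B1 Bj Hne VW1 VVj LW1 LVj DW1 DVj) as [E31 E32].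
  destruct (main_sum a b (Zj (p1, q1)) (Zhj (p0, q0)) p0 q0 p1 q1 Bj Bj Hne VWj VVj LWj LVj DWj DVj) as [E41 E42].
  rewrite !c1_mul, !c2_mul in *.
  unfold B1, Bj, c1, c2, c3, c4, RtoC in *; simpl in *.
  split; apply B_ext; unfold c1, c2, c3, c4, Badd, Bopp, Bsub, Bmul, Bj, RtoC; simpl; lra.
Qed.
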